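(* Let $f$ be smooth and bistable (there is $\alpha\in(0,1)$ with $f(0)=f(\alpha)=f(1)=0$, $f'(0),f'(1)<0<f'(\alpha)$, $f>0$ on $(-\infty,0)\cup(\alpha,1)$, $f<0$ on $(0,\alpha)\cup(1,\infty)$), $\tau_m=1/\sup_{[0,1]}|f'|$, and for $\tau\in(0,\tau_m)$ let $c=c_\ast(\tau)$, $(U,V)$ be the traveling wave speed and profile ($cU'+V'+f(U)=0$, $U'+c\tau V'-V=0$, $(U,V)(-\infty)=(0,0)$, $(U,V)(+\infty)=(1,0)$). Let $\mathcal{L}^\tau=-\mathbf{B}^{-1}(\mathbf{A}\partial_x+\mathbf{C}(x))$ on $L^2(\mathbb{R};\mathbb{C}^2)$ with domain $H^2(\mathbb{R};\mathbb{C}^2)$, where $\mathbf{A}=\begin{pmatrix}-c&-1\\-1&-c\tau\end{pmatrix}$, $\mathbf{B}=\mathrm{diag}(1,\tau)$, $\mathbf{C}(x)=\mathrm{diag}(-f'(U(x)),1)$. Then for each $\tau\in(0,\tau_m)$, $\lambda=0$ is an eigenvalue of $\mathcal{L}^\tau$ with geometric multiplicity equal to one, and its eigenspace is generated by $(U_x,V_x)^\top\in H^2(\mathbb{R};\mathbb{C}^2)$.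
   Context: The traveling wave is unique up to translation; a fixed translate is used. *)

(* Defs.v *)
From Stdlib Require Import Reals.
From Coquelicot Require Import Coquelicot.
Open Scope R_scope.

Definition smooth (f : R -> R) : Prop := forall (n : nat) (x : R), ex_derive_n f n x.

Definition bistable (f : R -> R) : Prop :=
  exists alpha : R, 0 < alpha < 1 /\
    f 0 = 0 /\ f alpha = 0 /\ f 1 = 0 /\
    Derive f 0 < 0 /\ Derive f 1 < 0 /\ 0 < Derive f alpha /\
    (forall u, u < 0 -> 0 < f u) /\ (forall u, alpha < u < 1 -> 0 < f u) /\
    (forall u, 0 < u < alpha -> f u < 0) /\ (forall u, 1 < u -> f u < 0).

Definition tau_m (f : R -> R) : R :=
  / real (Lub_Rbar (fun y => exists u, 0 <= u <= 1 /\ y = Rabs (Derive f u))).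

Definition traveling_wave (f : R -> R) (tau c : R) (U V : R -> R) : Prop :=
  (forall x, ex_derive U x /\ ex_derive V x) /\
  (forall x, c * Derive U x + Derive V x + f (U x) = 0) /\
  (forall x, Derive U x + c * tau * Derive V x - V x = 0) /\
  is_lim U m_infty 0 /\ is_lim V m_infty 0 /\
  is_lim U p_infty 1 /\ is_lim V p_infty 0.

Definition L2C (g : R -> C) : Prop :=
  ex_RInt_gen (fun x => (Cmod (g x)) ^ 2) (Rbar_locally m_infty) (Rbar_locally p_infty).

(* h is in H^2(R; C) (classical version: h twice differentiable with continuous
   second derivative, h, h', h'' in L^2). *)
Definition H2C (h : R -> C) : Prop :=
  exists h1 h2 : R -> C,
    (forall x, is_derive h x (h1 x)) /\
    (forall x, is_derive h1 x (h2 x)) /\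
    (forall x, continuous h2 x) /\
    L2C h /\ L2C h1 /\ L2C h2.

Definition H2C2 (w : R -> C * C) : Prop :=
  H2C (fun x => fst (w x)) /\ H2C (fun x => snd (w x)).

(* is_Lop f c tau U w z :  z = L^tau w, where
   L^tau = - B^{-1} (A d/dx + C(x)),  A = [[-c,-1],[-1,-c tau]],
   B = diag(1, tau),  C(x) = diag(-f'(U x), 1). *)
Definition is_Lop (f : R -> R) (c tau : R) (U : R -> R)
    (w : R -> C * C) (z : R -> C * C) : Prop :=
  exists d1 d2 : R -> C,
    (forall x, is_derive (fun y => fst (w y)) x (d1 x)) /\
    (forall x, is_derive (fun y => snd (w y)) x (d2 x)) /\
    (forall x,
      z x =
      ( Copp (Cplus (Cplus (Cmult (RtoC (- c)) (d1 x)) (Cmult (RtoC (-1)) (d2 x)))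
                    (Cmult (RtoC (- Derive f (U x))) (fst (w x)))),
        Cmult (RtoC (- / tau))
              (Cplus (Cplus (Cmult (RtoC (-1)) (d1 x)) (Cmult (RtoC (- c * tau)) (d2 x)))
                     (snd (w x))) )).

(* Main.v *)
Require Import Defs.
From Stdlib Require Import Reals Lra Lia Psatz.
From Coquelicot Require Import Coquelicot.
Open Scope R_scope.


Lemma is_derive_cont_pt (D : R -> R) t l : is_derive D t l -> continuity_pt D t.
Proof.
  intros H. apply continuity_pt_filterlim.
  apply (ex_derive_continuous D t). exists l. exact H.
Qed.

Lemma incr_of_deriv (D D' : R -> R) a b : a <= b ->
  (forall t, a <= t <= b -> is_derive D t (D' t)) ->
  (forall t, a <= t <= b -> 0 <= D' t) -> D a <= D b.
Proof.
  intros Hab Hd Hp.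
  destruct (MVT_gen D a b D') as [c [Hc Heq]].
  - intros x Hx. rewrite Rmin_left in Hx by lra. rewrite Rmax_right in Hx by lra.
    apply Hd; lra.
  - intros x Hx. rewrite Rmin_left in Hx by lra. rewrite Rmax_right in Hx by lra.
    eapply is_derive_cont_pt. apply Hd; lra.
  - rewrite Rmin_left in Hc by lra. rewrite Rmax_right in Hc by lra.
    assert (0 <= D' c) by (apply Hp; lra). nra.
Qed.

Lemma lim_p_eps (h : R -> R) (l : R) : is_lim h p_infty l ->
  forall eps, 0 < eps -> exists M, forall x, M < x -> Rabs (h x - l) < eps.
Proof.
  intros H eps Heps. apply is_lim_spec in H.
  exact (H (mkposreal eps Heps)).
Qed.

Lemma lim_m_eps (h : R -> R) (l : R) : is_lim h m_infty l ->
  forall eps, 0 < eps -> exists M, forall x, x < M -> Rabs (h x - l) < eps.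
Proof.
  intros H eps Heps. apply is_lim_spec in H.
  exact (H (mkposreal eps Heps)).
Qed.

Lemma bounded_of_lims (h : R -> R) (l1 l2 : R) : (forall x, continuity_pt h x) ->
  is_lim h m_infty l1 -> is_lim h p_infty l2 -> exists K, forall x, Rabs (h x) <= K.
Proof.
  intros Hc H1 H2.
  destruct (lim_m_eps h l1 H1 1 Rlt_0_1) as [M1 HM1].
  destruct (lim_p_eps h l2 H2 1 Rlt_0_1) as [M2 HM2].
  destruct (continuity_ab_maj (fun x => Rabs (h x)) M1 (Rmax M1 M2)) as [xm [Hxm _]].
  - apply Rmax_l.
  - intros c _. apply (continuity_pt_comp h Rabs c (Hc c)). apply Rcontinuity_abs.
  - exists (Rmax (Rabs (h xm)) (Rmax (Rabs l1 + 1) (Rabs l2 + 1))).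
    intros x.
    destruct (Rlt_dec x M1) as [Hx1|Hx1].
    + specialize (HM1 x Hx1).
      assert (Rabs (h x) <= Rabs l1 + 1).
      { pose proof (Rabs_triang_inv (h x) l1). lra. }
      apply Rle_trans with (Rabs l1 + 1); [lra|].
      eapply Rle_trans; [|apply Rmax_r]. apply Rmax_l.
    + destruct (Rlt_dec M2 x) as [Hx2|Hx2].
      * specialize (HM2 x Hx2).
        assert (Rabs (h x) <= Rabs l2 + 1).
        { pose proof (Rabs_triang_inv (h x) l2). lra. }
        apply Rle_trans with (Rabs l2 + 1); [lra|].
        eapply Rle_trans; [|apply Rmax_r]. apply Rmax_r.
      * eapply Rle_trans; [|apply Rmax_l]. apply Hxm.
        split; [lra|]. eapply Rle_trans; [|apply Rmax_r]. lra.
Qed.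

Lemma RInt_mono_interval (h : R -> R) a0 a b b0 :
  a0 <= a -> a <= b -> b <= b0 -> ex_RInt h a0 b0 -> (forall x, 0 <= h x) ->
  ex_RInt h a b /\ RInt h a b <= RInt h a0 b0.
Proof.
  intros H1 H2 H3 Hex Hp.
  assert (E1 : ex_RInt h a0 b) by (apply (ex_RInt_Chasles_1 h a0 b b0); [lra|exact Hex]).
  assert (E2 : ex_RInt h b b0) by (apply (ex_RInt_Chasles_2 h a0 b b0); [lra|exact Hex]).
  assert (E3 : ex_RInt h a0 a) by (apply (ex_RInt_Chasles_1 h a0 a b); [lra|exact E1]).
  assert (E4 : ex_RInt h a b) by (apply (ex_RInt_Chasles_2 h a0 a b); [lra|exact E1]).
  split; [exact E4|].
  rewrite <- (RInt_Chasles h a0 b b0 E1 E2).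
  rewrite <- (RInt_Chasles h a0 a b E3 E4).
  assert (0 <= RInt h a0 a) by (apply RInt_ge_0; auto).
  assert (0 <= RInt h b b0) by (apply RInt_ge_0; auto).
  unfold plus; simpl. lra.
Qed.

Lemma bound_of_RInt_gen (h : R -> R) :
  ex_RInt_gen h (Rbar_locally m_infty) (Rbar_locally p_infty) -> (forall x, 0 <= h x) ->
  exists B, forall a b, a <= b -> ex_RInt h a b /\ RInt h a b <= B.
Proof.
  intros [l Hl] Hp.
  assert (Hb := Hl (ball l (mkposreal 1 Rlt_0_1)) (locally_ball l _)).
  destruct Hb as [Q R' [M1 HQ] [M2 HR] Hall].
  exists (l + 1). intros a b Hab.
  destruct (Hall (Rmin a (M1 - 1)) (Rmax b (M2 + 1))) as [y [Hy Hby]].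
  - apply HQ. pose proof (Rmin_r a (M1 - 1)). lra.
  - apply HR. pose proof (Rmax_r b (M2 + 1)). lra.
  - simpl in Hy.
    destruct (RInt_mono_interval h (Rmin a (M1 - 1)) a b (Rmax b (M2+1))) as [E Hle];
      try apply Rmin_l; try apply Rmax_l; auto.
    + exists y; exact Hy.
    + split; [exact E|].
      rewrite (is_RInt_unique _ _ _ _ Hy) in Hle.
      unfold ball in Hby; simpl in Hby; unfold AbsRing_ball, abs, minus, plus, opp in Hby; simpl in Hby.
      apply Rabs_lt_between in Hby. lra.
Qed.

Lemma ex_RInt_cont (h : R -> R) a b : (forall x, continuous h x) -> ex_RInt h a b.
Proof. intros Hc. apply (@ex_RInt_continuous R_CompleteNormedModule). intros; apply Hc. Qed.

Lemma RInt_gen_of_bounded (h : R -> R) :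
  (forall x, continuous h x) -> (forall x, 0 <= h x) ->
  (exists B, forall a b, a <= b -> RInt h a b <= B) ->
  ex_RInt_gen h (Rbar_locally m_infty) (Rbar_locally p_infty).
Proof.
  intros Hc Hp [B HB].
  set (E := fun r => exists a b, a <= b /\ r = RInt h a b).
  assert (HE1 : bound E).
  { exists B. intros r [a [b [Hab ->]]]. apply HB; exact Hab. }
  assert (HE2 : exists x, E x).
  { exists (RInt h 0 0). exists 0, 0. split; [lra|reflexivity]. }
  destruct (completeness E HE1 HE2) as [L [HLub HLmin]].
  exists L. intros P [eps Heps].
  assert (Hr : exists a0 b0, a0 <= b0 /\ L - eps < RInt h a0 b0).
  { destruct (Rlt_dec (L - eps) L) as [_|Hn]; [|destruct eps; simpl in *; lra].
    apply Classical_Prop.NNPP. intros Hno.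
    assert (L <= L - eps).
    { apply HLmin. intros r [a [b [Hab ->]]].
      destruct (Rle_dec (RInt h a b) (L - eps)) as [Hle|Hgt]; [exact Hle|].
      exfalso. apply Hno. exists a, b. split; [exact Hab|lra]. }
    destruct eps; simpl in *; lra. }
  destruct Hr as [a0 [b0 [Hab0 Hr]]].
  apply (Filter_prod _ _ _ (fun x => x < a0) (fun y => b0 < y)).
  - exists a0. auto.
  - exists b0. auto.
  - intros x y Hx Hy. simpl. exists (RInt h x y). split.
    + apply (@RInt_correct R_CompleteNormedModule). apply ex_RInt_cont; exact Hc.
    + apply Heps.
      destruct (RInt_mono_interval h x a0 b0 y) as [_ Hle]; try lra.
      * apply ex_RInt_cont; exact Hc.
      * exact Hp.
      * assert (RInt h x y <= L).
        { apply HLub. exists x, y. split; [lra|reflexivity]. }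
        unfold ball; simpl; unfold AbsRing_ball, abs, minus, plus, opp; simpl.
        apply Rabs_lt_between. destruct eps; simpl in *. lra.
Qed.

Lemma is_derive_RInt_cont (g : R -> R) a t : (forall x, continuous g x) ->
  is_derive (fun s => RInt g a s) t (g t).
Proof.
  intros Hc. apply (@is_derive_RInt R_CompleteNormedModule g (RInt g a) a t).
  - apply filter_forall. intros s. apply (@RInt_correct R_CompleteNormedModule).
    apply ex_RInt_cont; exact Hc.
  - apply Hc.
Qed.

Lemma lyap_interval (Q Q' g : R -> R) kappa a b : a <= b -> (forall x, continuous g x) ->
  (forall t, a <= t <= b -> is_derive Q t (Q' t)) ->
  (forall t, a <= t <= b -> kappa * g t <= Q' t) -> kappa * RInt g a b <= Q b - Q a.
Proof.
  intros Hab Hc Hd Hk.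
  assert (H := incr_of_deriv (fun t => Q t - kappa * RInt g a t) (fun t => Q' t - kappa * g t) a b Hab).
  simpl in H. rewrite RInt_point in H. unfold zero in H; simpl in H.
  assert (Q a - kappa * 0 <= Q b - kappa * RInt g a b).
  { apply H.
    - intros t Ht. apply (is_derive_minus Q (fun t => kappa * RInt g a t)).
      + apply Hd; exact Ht.
      + apply (is_derive_scal (fun t => RInt g a t)). apply is_derive_RInt_cont; exact Hc.
    - intros t Ht. specialize (Hk t Ht). lra. }
  lra.
Qed.

Lemma cont_eps (D : R -> R) s : continuous D s ->
  forall eps, 0 < eps -> exists delta, 0 < delta /\ forall t, Rabs (t - s) < delta -> Rabs (D t - D s) < eps.
Proof.
  intros Hc eps Heps.
  destruct (proj1 (filterlim_locally D (D s)) Hc (mkposreal eps Heps)) as [d Hd].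
  exists d. split; [apply cond_pos|]. intros t Ht. apply (Hd t). exact Ht.
Qed.

Lemma zero_of_lyap (D D' : R -> R) eps : 0 < eps -> (forall x, is_derive D x (D' x)) ->
  (forall x, 0 <= D x) -> is_lim D p_infty 0 -> (forall x, D x < eps -> 0 <= D' x) ->
  forall x, D x = 0.
Proof.
  intros Heps Hd Hp Hl Hs.
  assert (Hmono : forall a b, a <= b -> (forall t, a <= t <= b -> D t < eps) -> D a <= D b).
  { intros a b Hab Ht. apply (incr_of_deriv D D' a b Hab).
    - intros; apply Hd.
    - intros t Ht'. apply Hs. apply Ht; exact Ht'. }
  assert (Hcont : forall x, continuous D x).
  { intros x. apply (ex_derive_continuous D x). exists (D' x); apply Hd. }
  intros x1. destruct (Req_dec (D x1) 0) as [|Hne]; [assumption|exfalso].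
  assert (Hx1 : 0 < D x1) by (specialize (Hp x1); lra).
  destruct (lim_p_eps D 0 Hl eps Heps) as [X HX].
  assert (HX' : forall x, X < x -> D x < eps).
  { intros x Hx. specialize (HX x Hx). rewrite Rminus_0_r in HX.
    apply Rabs_lt_between in HX. lra. }
  destruct (Classical_Prop.classic (exists x2, X < x2 /\ 0 < D x2)) as [[x2 [Hx2 Hx2p]]|HB].
  - destruct (lim_p_eps D 0 Hl (D x2) Hx2p) as [X2 HX2].
    set (t := Rmax x2 X2 + 1).
    assert (Ht1 : x2 <= t) by (unfold t; pose proof (Rmax_l x2 X2); lra).
    assert (Ht2 : X2 < t) by (unfold t; pose proof (Rmax_r x2 X2); lra).
    specialize (HX2 t Ht2). rewrite Rminus_0_r in HX2. apply Rabs_lt_between in HX2.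
    assert (D x2 <= D t).
    { apply Hmono; [exact Ht1|]. intros s Hs'. apply HX'. lra. }
    lra.
  - set (E := fun x => 0 < D x).
    assert (HE1 : bound E).
    { exists X. intros x Hx. destruct (Rle_dec x X) as [|Hn]; [assumption|].
      exfalso. apply HB. exists x. split; [lra|exact Hx]. }
    destruct (completeness E HE1 (ex_intro _ x1 Hx1)) as [s [Hub Hmin]].
    assert (Hs0 : D s = 0).
    { destruct (Req_dec (D s) 0) as [|Hn]; [assumption|exfalso].
      assert (Hsp : 0 < D s) by (specialize (Hp s); lra).
      destruct (cont_eps D s (Hcont s) (D s) Hsp) as [de [Hde Hde']].
      assert (E (s + de/2)).
      { unfold E. specialize (Hde' (s + de/2)).
        assert (Rabs (D (s + de / 2) - D s) < D s).
        { apply Hde'. rewrite Rabs_right; lra. }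
        apply Rabs_lt_between in H. lra. }
      specialize (Hub _ H). lra. }
    destruct (cont_eps D s (Hcont s) eps Heps) as [de [Hde Hde']].
    assert (Hex : exists x, E x /\ s - de < x).
    { apply Classical_Prop.NNPP. intros Hno.
      assert (s <= s - de).
      { apply Hmin. intros x Hx. destruct (Rle_dec x (s - de)) as [|Hn]; [assumption|].
        exfalso. apply Hno. exists x. split; [exact Hx|lra]. }
      lra. }
    destruct Hex as [x [Hx Hxs]].
    assert (Hxle : x <= s) by (apply Hub; exact Hx).
    assert (D x <= D s).
    { apply Hmono; [exact Hxle|]. intros t Ht.
      assert (Rabs (D t - D s) < eps) by (apply Hde'; apply Rabs_lt_between; lra).
      rewrite Hs0, Rminus_0_r in H. apply Rabs_lt_between in H. lra. }
    unfold E in Hx. lra.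
Qed.

Lemma cross_bound (b y1 y2 L : R) : Rabs b <= L ->
  - (L * (y1^2 + y2^2) / 2) <= b * (y1 * y2) <= L * (y1^2 + y2^2) / 2.
Proof.
  intros Hb. apply Rabs_le_between in Hb.
  assert (0 <= (L - b) * (y1 + y2)^2) by (apply Rmult_le_pos; [lra|apply pow2_ge_0]).
  assert (0 <= (L + b) * (y1 - y2)^2) by (apply Rmult_le_pos; [lra|apply pow2_ge_0]).
  assert (0 <= (L - b) * (y1 - y2)^2) by (apply Rmult_le_pos; [lra|apply pow2_ge_0]).
  assert (0 <= (L + b) * (y1 + y2)^2) by (apply Rmult_le_pos; [lra|apply pow2_ge_0]).
  split; nra.
Qed.

Lemma diag_bound (a y L : R) : Rabs a <= L -> - (L * y^2) <= a * y^2 <= L * y^2.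
Proof.
  intros Ha. apply Rabs_le_between in Ha.
  assert (0 <= y^2) by apply pow2_ge_0. split; nra.
Qed.

Lemma quad_bound (a b c d y1 y2 L : R) :
  Rabs a <= L -> Rabs b <= L -> Rabs c <= L -> Rabs d <= L ->
  Rabs (2 * (y1 * (a * y1 + b * y2) + y2 * (c * y1 + d * y2))) <= 4 * L * (y1 ^ 2 + y2 ^ 2).
Proof.
  intros Ha Hb Hc Hd.
  pose proof (diag_bound a y1 L Ha). pose proof (diag_bound d y2 L Hd).
  pose proof (cross_bound b y1 y2 L Hb). pose proof (cross_bound c y1 y2 L Hc).
  apply Rabs_le. split; nra.
Qed.

Lemma Dval (f : R -> R) x l : is_derive f x l -> Derive (fun y : R => f y) x = l.
Proof. intros H. apply is_derive_unique. exact H. Qed.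

Lemma lin_unique (y1 y2 m11 m12 m21 m22 : R -> R) L x0 :
  (forall x, is_derive y1 x (m11 x * y1 x + m12 x * y2 x)) ->
  (forall x, is_derive y2 x (m21 x * y1 x + m22 x * y2 x)) ->
  (forall x, Rabs (m11 x) <= L /\ Rabs (m12 x) <= L /\ Rabs (m21 x) <= L /\ Rabs (m22 x) <= L) ->
  y1 x0 = 0 -> y2 x0 = 0 -> forall x, y1 x = 0 /\ y2 x = 0.
Proof.
  intros H1 H2 HL Hy1 Hy2.
  set (K := 4 * L).
  set (p := fun x => y1 x ^ 2 + y2 x ^ 2).
  set (p' := fun x => 2 * (y1 x * (m11 x * y1 x + m12 x * y2 x) + y2 x * (m21 x * y1 x + m22 x * y2 x))).
  assert (Hb : forall x, Rabs (p' x) <= K * p x).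
  { intros x. destruct (HL x) as [a [b [c d]]]. unfold p', K, p. apply quad_bound; auto. }
  assert (Hp0 : p x0 = 0) by (unfold p; rewrite Hy1, Hy2; ring).
  assert (Hpos : forall x, 0 <= p x) by (intros; unfold p; pose proof (pow2_ge_0 (y1 x)); pose proof (pow2_ge_0 (y2 x)); lra).
  assert (Hz : forall x, p x = 0).
  { intros x. destruct (Rle_dec x0 x) as [Hx|Hx].
    - set (e := fun t => - ((y1 t ^ 2 + y2 t ^ 2) * exp (- K * t))).
      assert (He : e x0 <= e x).
      { apply (incr_of_deriv e (fun t => - (p' t * exp (- K * t) - K * p t * exp (- K * t)))); [exact Hx| |].
        - intros t _. unfold e. auto_derive.
          + split; [exists (m11 t * y1 t + m12 t * y2 t); apply H1|].
            split; [exists (m21 t * y1 t + m22 t * y2 t); apply H2|]. exact I.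
          + rewrite (Dval y1 t _ (H1 t)).
            rewrite (Dval y2 t _ (H2 t)). unfold p', p. ring.
        - intros t _. specialize (Hb t). apply Rabs_le_between in Hb.
          pose proof (exp_pos (- K * t)). nra. }
      unfold e in He. fold (p x0) (p x) in He. rewrite Hp0 in He. pose proof (exp_pos (- K * x)).
      specialize (Hpos x). nra.
    - set (e := fun t => (y1 t ^ 2 + y2 t ^ 2) * exp (K * t)).
      assert (He : e x <= e x0).
      { apply (incr_of_deriv e (fun t => p' t * exp (K * t) + K * p t * exp (K * t))); [lra| |].
        - intros t _. unfold e. auto_derive.
          + split; [exists (m11 t * y1 t + m12 t * y2 t); apply H1|].
            split; [exists (m21 t * y1 t + m22 t * y2 t); apply H2|]. exact I.
          + rewrite (Dval y1 t _ (H1 t)).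
            rewrite (Dval y2 t _ (H2 t)). unfold p', p. ring.
        - intros t _. specialize (Hb t). apply Rabs_le_between in Hb.
          pose proof (exp_pos (K * t)). nra. }
      unfold e in He. fold (p x0) (p x) in He. rewrite Hp0 in He. pose proof (exp_pos (K * x)).
      specialize (Hpos x). nra. }
  intros x. specialize (Hz x). unfold p in Hz.
  pose proof (pow2_ge_0 (y1 x)). pose proof (pow2_ge_0 (y2 x)).
  split; nra.
Qed.


Lemma tail_p (Q Q' g : R -> R) kappa X : 0 < kappa -> (forall x, continuous g x) ->
  (forall x, 0 <= g x) -> (forall t, is_derive Q t (Q' t)) -> is_lim Q p_infty 0 ->
  (forall t, X <= t -> kappa * g t <= Q' t) ->
  forall a b, X <= a -> a <= b -> RInt g a b <= - Q X / kappa.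
Proof.
  intros Hk Hc Hg HQ Hl Hd a b Ha Hab.
  assert (Hmono : forall s t, X <= s -> s <= t -> Q s <= Q t).
  { intros s t Hs Hst. apply (incr_of_deriv Q Q' s t Hst); [intros; apply HQ|].
    intros u Hu. specialize (Hd u ltac:(lra)). specialize (Hg u). nra. }
  assert (Hb : Q b <= 0).
  { destruct (Rle_dec (Q b) 0) as [|Hn]; [assumption|exfalso].
    destruct (lim_p_eps Q 0 Hl (Q b) ltac:(lra)) as [M HM].
    specialize (HM (Rmax b M + 1) ltac:(pose proof (Rmax_r b M); lra)).
    rewrite Rminus_0_r in HM. apply Rabs_lt_between in HM.
    assert (Q b <= Q (Rmax b M + 1)) by (apply Hmono; [lra|pose proof (Rmax_l b M); lra]).
    lra. }
  assert (HQa : Q X <= Q a) by (apply Hmono; lra).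
  assert (H := lyap_interval Q Q' g kappa a b Hab Hc (fun t _ => HQ t) (fun t Ht => Hd t ltac:(lra))).
  apply (Rmult_le_reg_l kappa); [exact Hk|].
  replace (kappa * (- Q X / kappa)) with (- Q X) by (field; lra). lra.
Qed.

Lemma tail_m (Q Q' g : R -> R) kappa X : 0 < kappa -> (forall x, continuous g x) ->
  (forall x, 0 <= g x) -> (forall t, is_derive Q t (Q' t)) -> is_lim Q m_infty 0 ->
  (forall t, t <= X -> kappa * g t <= Q' t) ->
  forall a b, a <= b -> b <= X -> RInt g a b <= Q X / kappa.
Proof.
  intros Hk Hc Hg HQ Hl Hd a b Hab Hb.
  assert (Hmono : forall s t, t <= X -> s <= t -> Q s <= Q t).
  { intros s t Hs Hst. apply (incr_of_deriv Q Q' s t Hst); [intros; apply HQ|].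
    intros u Hu. specialize (Hd u ltac:(lra)). specialize (Hg u). nra. }
  assert (Ha : 0 <= Q a).
  { destruct (Rle_dec 0 (Q a)) as [|Hn]; [assumption|exfalso].
    destruct (lim_m_eps Q 0 Hl (- Q a) ltac:(lra)) as [M HM].
    specialize (HM (Rmin a M - 1) ltac:(pose proof (Rmin_r a M); lra)).
    rewrite Rminus_0_r in HM. apply Rabs_lt_between in HM.
    assert (Q (Rmin a M - 1) <= Q a) by (apply Hmono; [lra|pose proof (Rmin_l a M); lra]).
    lra. }
  assert (HQb : Q b <= Q X) by (apply Hmono; lra).
  assert (H := lyap_interval Q Q' g kappa a b Hab Hc (fun t _ => HQ t) (fun t Ht => Hd t ltac:(lra))).
  apply (Rmult_le_reg_l kappa); [exact Hk|].
  replace (kappa * (Q X / kappa)) with (Q X) by (field; lra). lra.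
Qed.

Lemma bounded_int_of_tails (g : R -> R) X1 X2 B1 B2 :
  (forall x, continuous g x) -> (forall x, 0 <= g x) ->
  (forall a b, a <= b -> b <= X1 -> RInt g a b <= B1) ->
  (forall a b, X2 <= a -> a <= b -> RInt g a b <= B2) ->
  exists B, forall a b, a <= b -> RInt g a b <= B.
Proof.
  intros Hc Hg H1 H2.
  set (Y := Rmin X1 X2).
  exists (B1 + RInt g Y X2 + B2). intros a b Hab.
  set (a' := Rmin a Y). set (b' := Rmax b X2).
  assert (Ha' : a' <= a) by apply Rmin_l.
  assert (Ha'Y : a' <= Y) by apply Rmin_r.
  assert (Hb' : b <= b') by apply Rmax_l.
  assert (Hb'X : X2 <= b') by apply Rmax_r.
  assert (HY1 : Y <= X1) by apply Rmin_l.
  assert (HY2 : Y <= X2) by apply Rmin_r.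
  destruct (RInt_mono_interval g a' a b b' Ha' Hab Hb' (ex_RInt_cont g a' b' Hc) Hg) as [_ Hle].
  rewrite <- (RInt_Chasles g a' Y b' (ex_RInt_cont g _ _ Hc) (ex_RInt_cont g _ _ Hc)) in Hle.
  rewrite <- (RInt_Chasles g Y X2 b' (ex_RInt_cont g _ _ Hc) (ex_RInt_cont g _ _ Hc)) in Hle.
  unfold plus in Hle; simpl in Hle.
  assert (RInt g a' Y <= B1) by (apply H1; lra).
  assert (RInt g X2 b' <= B2) by (apply H2; lra).
  lra.
Qed.

Lemma W_zero (W T h : R -> R) Kp B :
  (forall x, is_derive W x (T x * W x)) -> 0 < Kp -> (forall x, W x ^ 2 <= Kp * h x) ->
  (forall a b, a <= b -> ex_RInt h a b /\ RInt h a b <= B) ->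
  ((exists X, forall t, X <= t -> 0 <= T t) \/ (exists X, forall t, t <= X -> T t <= 0)) ->
  exists x1, W x1 = 0.
Proof.
  intros HW HK Hh HB [[X HX]|[X HX]]; exists X;
    (destruct (Req_dec (W X) 0) as [|Hne]; [assumption|exfalso]);
    set (de := W X ^ 2); assert (Hde : 0 < de) by (unfold de; simpl; rewrite Rmult_1_r; apply (Rsqr_pos_lt (W X) Hne)).
  - assert (Hge : forall t, X <= t -> de / Kp <= h t).
    { intros t Ht.
      assert (de <= W t ^ 2).
      { apply (incr_of_deriv (fun s => W s ^ 2) (fun s => 2 * T s * W s ^ 2) X t Ht).
        - intros s _. auto_derive; [exists (T s * W s); apply HW|].
          rewrite (Dval W s _ (HW s)). ring.
        - intros s Hs. specialize (HX s ltac:(lra)). pose proof (pow2_ge_0 (W s)). nra. }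
      specialize (Hh t). apply (Rmult_le_reg_l Kp); [exact HK|].
      replace (Kp * (de / Kp)) with de by (field; lra). lra. }
    set (b := X + (Rabs B * Kp / de + 1)).
    assert (Hb : X <= b).
    { unfold b. assert (0 <= Rabs B * Kp / de) by (apply Rdiv_le_0_compat; [apply Rmult_le_pos; [apply Rabs_pos|lra]|lra]). lra. }
    destruct (HB X b Hb) as [Hex Hle].
    assert (RInt (fun _ => de / Kp) X b <= RInt h X b).
    { apply RInt_le; auto. apply ex_RInt_const. intros; apply Hge; lra. }
    rewrite RInt_const in H. unfold scal in H; simpl in H; unfold mult in H; simpl in H.
    assert (Hbx : b - X = Rabs B * Kp / de + 1) by (unfold b; ring).
    rewrite Hbx in H.
    assert ((Rabs B * Kp / de + 1) * (de / Kp) = Rabs B + de / Kp) by (field; lra).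
    assert (0 < de / Kp) by (apply Rdiv_lt_0_compat; lra).
    pose proof (Rle_abs B). lra.
  - assert (Hge : forall t, t <= X -> de / Kp <= h t).
    { intros t Ht.
      assert (- W t ^ 2 <= - de).
      { apply (incr_of_deriv (fun s => - W s ^ 2) (fun s => - (2 * T s * W s ^ 2)) t X Ht).
        - intros s _. auto_derive; [exists (T s * W s); apply HW|].
          rewrite (Dval W s _ (HW s)). ring.
        - intros s Hs. specialize (HX s ltac:(lra)). pose proof (pow2_ge_0 (W s)). nra. }
      specialize (Hh t). apply (Rmult_le_reg_l Kp); [exact HK|].
      replace (Kp * (de / Kp)) with de by (field; lra). lra. }
    set (a := X - (Rabs B * Kp / de + 1)).
    assert (Ha : a <= X).
    { unfold a. assert (0 <= Rabs B * Kp / de) by (apply Rdiv_le_0_compat; [apply Rmult_le_pos; [apply Rabs_pos|lra]|lra]). lra. }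
    destruct (HB a X Ha) as [Hex Hle].
    assert (RInt (fun _ => de / Kp) a X <= RInt h a X).
    { apply RInt_le; auto. apply ex_RInt_const. intros; apply Hge; lra. }
    rewrite RInt_const in H. unfold scal in H; simpl in H; unfold mult in H; simpl in H.
    assert (Hbx : X - a = Rabs B * Kp / de + 1) by (unfold a; ring).
    rewrite Hbx in H.
    assert ((Rabs B * Kp / de + 1) * (de / Kp) = Rabs B + de / Kp) by (field; lra).
    assert (0 < de / Kp) by (apply Rdiv_lt_0_compat; lra).
    pose proof (Rle_abs B). lra.
Qed.


Lemma smooth_d1 f : smooth f -> forall x, is_derive f x (Derive f x).
Proof. intros Hs x. apply Derive_correct. exact (Hs 1%nat x). Qed.

Lemma smooth_d2 f : smooth f -> forall x, is_derive (Derive f) x (Derive (Derive f) x).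
Proof. intros Hs x. apply Derive_correct. exact (Hs 2%nat x). Qed.

Lemma smooth_d3 f : smooth f -> forall x, is_derive (Derive (Derive f)) x (Derive (Derive (Derive f)) x).
Proof. intros Hs x. apply Derive_correct. exact (Hs 3%nat x). Qed.

Lemma is_derive_cont (h : R -> R) l x : is_derive h x l -> continuous h x.
Proof. intros H. apply (@ex_derive_continuous R_AbsRing R_NormedModule). exists l; exact H. Qed.

Lemma sq_lim_p (U : R -> R) (l : R) : is_lim U p_infty l -> is_lim (fun x => (U x - l) ^ 2) p_infty 0.
Proof.
  intros H. apply is_lim_spec. intros eps.
  destruct (lim_p_eps U l H (Rmin 1 eps) ltac:(apply Rmin_pos; [lra|apply cond_pos])) as [M HM].
  exists M. intros x Hx. specialize (HM x Hx).
  pose proof (Rmin_l 1 eps). pose proof (Rmin_r 1 eps).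
  rewrite Rminus_0_r. rewrite Rabs_right by (apply Rle_ge, pow2_ge_0).
  apply Rabs_lt_between in HM. nra.
Qed.

Lemma sq_lim_m (U : R -> R) (l : R) : is_lim U m_infty l -> is_lim (fun x => (U (- x) - l) ^ 2) p_infty 0.
Proof.
  intros H. apply is_lim_spec. intros eps.
  destruct (lim_m_eps U l H (Rmin 1 eps) ltac:(apply Rmin_pos; [lra|apply cond_pos])) as [M HM].
  exists (- M). intros x Hx. specialize (HM (- x) ltac:(lra)).
  pose proof (Rmin_l 1 eps). pose proof (Rmin_r 1 eps).
  rewrite Rminus_0_r. rewrite Rabs_right by (apply Rle_ge, pow2_ge_0).
  apply Rabs_lt_between in HM. nra.
Qed.

Lemma d_nonzero f tau c U V : smooth f -> bistable f -> 0 < tau ->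
  traveling_wave f tau c U V -> c * c * tau - 1 <> 0.
Proof.
  intros Hs [al [Hal [Hf0 [Hfa [Hf1 [Hd0 [Hd1 [Hda [Sneg [Sa1 [S0a S1]]]]]]]]]]] Ht
    [HUV [E1 [E2 [HUm [HVm [HUp HVp]]]]]] Hd.
  assert (Hc : c <> 0) by (intros ->; lra).
  assert (HU : forall x, is_derive U x (Derive U x)) by (intros; apply Derive_correct; apply HUV).
  assert (HVe : forall x, V x = - f (U x) / c).
  { intros x. specialize (E1 x). specialize (E2 x).
    apply (Rmult_eq_reg_l c); [|exact Hc].
    replace (c * (- f (U x) / c)) with (- f (U x)) by (field; exact Hc).
    replace (V x) with (Derive U x + c * tau * Derive V x) by lra.
    replace (c * (Derive U x + c * tau * Derive V x)) with (c * Derive U x + (c * c * tau) * Derive V x) by ring.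
    replace (c * c * tau) with 1 by lra. lra. }
  assert (HP2 : forall x, Derive V x = - (Derive f (U x) * Derive U x) / c).
  { intros x. rewrite (Derive_ext V (fun x => - f (U x) / c) x HVe).
    apply is_derive_unique. auto_derive.
    - split; [exists (Derive f (U x)); apply smooth_d1; exact Hs|].
      split; [exists (Derive U x); apply HU|]. exact I.
    - rewrite (Dval U x _ (HU x)). change (fun x : R => f x) with f. field. exact Hc. }
  assert (Key : forall x, Derive U x * (1 - tau * Derive f (U x)) = - c * tau * f (U x)).
  { intros x. specialize (E1 x). rewrite HP2 in E1.
    assert (Hcc : c * c * tau = 1) by lra.
    assert (E1' : c * c * Derive U x - Derive f (U x) * Derive U x + c * f (U x) = 0).
    { rewrite <- (Rmult_0_r c). rewrite <- E1. field. exact Hc. }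
    assert (H4 : Derive U x * (c * c * tau) - tau * Derive f (U x) * Derive U x + c * tau * f (U x) = 0).
    { replace 0 with (tau * 0) by ring. rewrite <- E1'. ring. }
    rewrite Hcc in H4. lra. }
  destruct (Rlt_dec 0 c) as [Hcp|Hcn].
  - (* c > 0 : look near +oo, equilibrium 1 *)
    destruct (cont_eps (Derive f) 1 (is_derive_cont _ _ _ (smooth_d2 f Hs 1)) (- Derive f 1) ltac:(lra))
      as [de [Hde Hde']].
    set (dl := Rmin de (1 - al)).
    assert (Hdl : 0 < dl) by (apply Rmin_pos; lra).
    assert (Hdl1 : dl <= de) by apply Rmin_l. assert (Hdl2 : dl <= 1 - al) by apply Rmin_r.
    clearbody dl.
    assert (Zero := zero_of_lyap (fun x => (U x - 1) ^ 2) (fun x => 2 * (U x - 1) * Derive U x) (dl ^ 2)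
      ltac:(nra)).
    assert (Z : forall x, (U x - 1) ^ 2 = 0).
    { apply Zero.
      - intros x. auto_derive; [exists (Derive U x); apply HU|]. rewrite (Dval U x _ (HU x)). ring.
      - intros; apply pow2_ge_0.
      - apply sq_lim_p. exact HUp.
      - intros x Hx.
        assert (Hb : Rabs (U x - 1) < dl).
        { apply Rabs_lt_between. split; nra. }
        assert (Hg : Derive f (U x) < 0).
        { assert (Rabs (U x - 1) < de) by (lra).
          specialize (Hde' (U x) H). apply Rabs_lt_between in Hde'. lra. }
        assert (Hsg : (U x - 1) * f (U x) <= 0).
        { apply Rabs_lt_between in Hb. 
          destruct (Rlt_dec (U x) 1) as [Hl1|Hl1].
          - assert (0 < f (U x)) by (apply Sa1; split; lra). nra.
          - destruct (Req_dec (U x) 1) as [He|He].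
            + rewrite He, Hf1. lra.
            + assert (f (U x) < 0) by (apply S1; lra). nra. }
        specialize (Key x).
        assert (0 <= (U x - 1) * Derive U x).
        { assert (Hk : 0 < 1 - tau * Derive f (U x)) by nra.
          assert (0 <= (1 - tau * Derive f (U x)) * ((U x - 1) * Derive U x)).
          { replace ((1 - tau * Derive f (U x)) * ((U x - 1) * Derive U x))
              with ((U x - 1) * (Derive U x * (1 - tau * Derive f (U x)))) by ring.
            rewrite Key. nra. }
          nra. }
        lra. }
    destruct (lim_m_eps U 0 HUm (1/2) ltac:(lra)) as [M HM].
    specialize (HM (M - 1) ltac:(lra)). specialize (Z (M - 1)).
    apply Rabs_lt_between in HM. nra.
  - (* c < 0 : look near -oo, equilibrium 0 *)
    assert (Hcn' : c < 0) by lra.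
    destruct (cont_eps (Derive f) 0 (is_derive_cont _ _ _ (smooth_d2 f Hs 0)) (- Derive f 0) ltac:(lra))
      as [de [Hde Hde']].
    set (dl := Rmin de al).
    assert (Hdl : 0 < dl) by (apply Rmin_pos; lra).
    assert (Hdl1 : dl <= de) by apply Rmin_l. assert (Hdl2 : dl <= al) by apply Rmin_r.
    clearbody dl.
    assert (Zero := zero_of_lyap (fun x => (U (- x) - 0) ^ 2) (fun x => - (2 * U (- x) * Derive U (- x))) (dl ^ 2)
      ltac:(nra)).
    assert (Z : forall x, (U (- x) - 0) ^ 2 = 0).
    { apply Zero.
      - intros x. auto_derive; [exists (Derive U (- x)); apply HU|]. rewrite (Dval U (- x) _ (HU (- x))). ring.
      - intros; apply pow2_ge_0.
      - apply sq_lim_m. exact HUm.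
      - intros x Hx. set (y := - x) in *.
        assert (Hb : Rabs (U y) < dl).
        { apply Rabs_lt_between. split; nra. }
        assert (Hg : Derive f (U y) < 0).
        { assert (Rabs (U y - 0) < de) by (rewrite Rminus_0_r; lra).
          specialize (Hde' (U y) H). apply Rabs_lt_between in Hde'. lra. }
        assert (Hsg : U y * f (U y) <= 0).
        { apply Rabs_lt_between in Hb. 
          destruct (Rlt_dec (U y) 0) as [Hl1|Hl1].
          - assert (0 < f (U y)) by (apply Sneg; lra). nra.
          - destruct (Req_dec (U y) 0) as [He|He].
            + rewrite He, Hf0. lra.
            + assert (f (U y) < 0) by (apply S0a; lra). nra. }
        specialize (Key y).
        assert (U y * Derive U y <= 0).
        { assert (Hk : 0 < 1 - tau * Derive f (U y)) by nra.
          assert ((1 - tau * Derive f (U y)) * (U y * Derive U y) <= 0).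
          { replace ((1 - tau * Derive f (U y)) * (U y * Derive U y))
              with (U y * (Derive U y * (1 - tau * Derive f (U y)))) by ring.
            rewrite Key. nra. }
          nra. }
        lra. }
    destruct (lim_p_eps U 1 HUp (1/2) ltac:(lra)) as [M HM].
    specialize (HM (M + 1) ltac:(lra)). specialize (Z (- (M + 1))).
    rewrite Ropp_involutive in Z.
    apply Rabs_lt_between in HM. nra.
Qed.


Definition Wave f tau c U V := smooth f /\ bistable f /\ 0 < tau /\ traveling_wave f tau c U V.

Definition dd c tau := c * c * tau - 1.
Definition gg f (U : R -> R) x := Derive f (U x).
Definition g2 f (U : R -> R) x := Derive (Derive f) (U x).
Definition P1 (U : R -> R) x := Derive U x.
Definition Q1 f tau c U V x := - (c * tau * gg f U x * P1 U x + P1 V x) / dd c tau.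
Definition Q2 f tau c U V x := (gg f U x * P1 U x + c * P1 V x) / dd c tau.
Definition R1 f tau c U V x :=
  - (c * tau * (g2 f U x * P1 U x * P1 U x + gg f U x * Q1 f tau c U V x) + Q2 f tau c U V x) / dd c tau.
Definition R2 f tau c U V x :=
  (g2 f U x * P1 U x * P1 U x + gg f U x * Q1 f tau c U V x + c * Q2 f tau c U V x) / dd c tau.


Lemma W_d f tau c U V : Wave f tau c U V -> dd c tau <> 0.
Proof. intros [Hs [Hb [Ht Hw]]]. unfold dd. apply (d_nonzero f tau c U V); auto. Qed.

Lemma W_dU f tau c U V : Wave f tau c U V -> forall x, is_derive U x (P1 U x).
Proof. intros [Hs [Hb [Ht [HUV _]]]] x. apply Derive_correct. apply HUV. Qed.

Lemma W_dV f tau c U V : Wave f tau c U V -> forall x, is_derive V x (P1 V x).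
Proof. intros [Hs [Hb [Ht [HUV _]]]] x. apply Derive_correct. apply HUV. Qed.

Lemma W_P1 f tau c U V : Wave f tau c U V ->
  forall x, P1 U x = - (c * tau * f (U x) + V x) / dd c tau.
Proof.
  intros HW x. pose proof (W_d _ _ _ _ _ HW) as Hd.
  destruct HW as [Hs [Hb [Ht [HUV [E1 [E2 _]]]]]].
  specialize (E1 x). specialize (E2 x). unfold P1.
  apply (Rmult_eq_reg_l (dd c tau)); [|exact Hd].
  replace (dd c tau * (- (c * tau * f (U x) + V x) / dd c tau)) with (- (c * tau * f (U x) + V x))
    by (field; exact Hd).
  unfold dd.
  replace (f (U x)) with (- c * Derive U x - Derive V x) by lra.
  replace (V x) with (Derive U x + c * tau * Derive V x) by lra. ring.
Qed.

Lemma W_P2 f tau c U V : Wave f tau c U V ->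
  forall x, P1 V x = (f (U x) + c * V x) / dd c tau.
Proof.
  intros HW x. pose proof (W_d _ _ _ _ _ HW) as Hd.
  destruct HW as [Hs [Hb [Ht [HUV [E1 [E2 _]]]]]].
  specialize (E1 x). specialize (E2 x). unfold P1.
  apply (Rmult_eq_reg_l (dd c tau)); [|exact Hd].
  replace (dd c tau * ((f (U x) + c * V x) / dd c tau)) with (f (U x) + c * V x)
    by (field; exact Hd).
  unfold dd.
  replace (f (U x)) with (- c * Derive U x - Derive V x) by lra.
  replace (V x) with (Derive U x + c * tau * Derive V x) by lra. ring.
Qed.

Lemma W_dg f tau c U V : Wave f tau c U V -> forall x, is_derive (gg f U) x (g2 f U x * P1 U x).
Proof.
  intros HW x. pose proof (W_dU _ _ _ _ _ HW) as HU. destruct HW as [Hs _].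
  unfold gg, g2.
  replace (Derive (Derive f) (U x) * P1 U x) with (scal (P1 U x) (Derive (Derive f) (U x)))
    by (unfold scal; simpl; unfold mult; simpl; ring).
  apply (is_derive_comp (Derive f) U x); [apply smooth_d2; exact Hs| apply HU].
Qed.

Lemma W_dP1 f tau c U V : Wave f tau c U V -> forall x, is_derive (P1 U) x (Q1 f tau c U V x).
Proof.
  intros HW x. pose proof (W_d _ _ _ _ _ HW) as Hd.
  pose proof (W_dU _ _ _ _ _ HW) as HU. pose proof (W_dV _ _ _ _ _ HW) as HV.
  pose proof (W_P1 _ _ _ _ _ HW) as HP1. pose proof (W_P1 _ _ _ _ _ HW x) as HP1x.
  destruct HW as [Hs _].
  apply (is_derive_ext (fun x => - (c * tau * f (U x) + V x) / dd c tau)); [intros; symmetry; apply HP1|].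
  auto_derive.
  - split; [exists (Derive f (U x)); apply smooth_d1; exact Hs|].
    split; [exists (P1 U x); apply HU|]. split; [exists (P1 V x); apply HV|]. exact I.
  - rewrite (Dval U x _ (HU x)), (Dval V x _ (HV x)). change (fun x : R => f x) with f.
    unfold Q1, gg. field. exact Hd.
Qed.

Lemma W_dP2 f tau c U V : Wave f tau c U V -> forall x, is_derive (P1 V) x (Q2 f tau c U V x).
Proof.
  intros HW x. pose proof (W_d _ _ _ _ _ HW) as Hd.
  pose proof (W_dU _ _ _ _ _ HW) as HU. pose proof (W_dV _ _ _ _ _ HW) as HV.
  pose proof (W_P2 _ _ _ _ _ HW) as HP2.
  destruct HW as [Hs _].
  apply (is_derive_ext (fun x => (f (U x) + c * V x) / dd c tau)); [intros; symmetry; apply HP2|].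
  auto_derive.
  - split; [exists (Derive f (U x)); apply smooth_d1; exact Hs|].
    split; [exists (P1 U x); apply HU|]. split; [exists (P1 V x); apply HV|]. exact I.
  - rewrite (Dval U x _ (HU x)), (Dval V x _ (HV x)). change (fun x : R => f x) with f.
    unfold Q2, gg. field. exact Hd.
Qed.

Lemma W_dQ1 f tau c U V : Wave f tau c U V -> forall x, is_derive (Q1 f tau c U V) x (R1 f tau c U V x).
Proof.
  intros HW x. pose proof (W_d _ _ _ _ _ HW) as Hd.
  pose proof (W_dP1 _ _ _ _ _ HW) as H1. pose proof (W_dP2 _ _ _ _ _ HW) as H2.
  pose proof (W_dg _ _ _ _ _ HW) as Hg.
  unfold Q1. auto_derive.
  - split; [eexists; apply Hg|]. split; [eexists; apply H1|]. split; [eexists; apply H2|]. exact I.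
  - rewrite (Dval _ x _ (Hg x)), (Dval _ x _ (H1 x)), (Dval _ x _ (H2 x)).
    unfold R1, Q1. field. exact Hd.
Qed.

Lemma W_dQ2 f tau c U V : Wave f tau c U V -> forall x, is_derive (Q2 f tau c U V) x (R2 f tau c U V x).
Proof.
  intros HW x. pose proof (W_d _ _ _ _ _ HW) as Hd.
  pose proof (W_dP1 _ _ _ _ _ HW) as H1. pose proof (W_dP2 _ _ _ _ _ HW) as H2.
  pose proof (W_dg _ _ _ _ _ HW) as Hg.
  unfold Q2. auto_derive.
  - split; [eexists; apply Hg|]. split; [eexists; apply H1|]. split; [eexists; apply H2|]. exact I.
  - rewrite (Dval _ x _ (Hg x)), (Dval _ x _ (H1 x)), (Dval _ x _ (H2 x)).
    unfold R2, Q1. field. exact Hd.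
Qed.

Lemma W_dg2 f tau c U V : Wave f tau c U V -> forall x, ex_derive (g2 f U) x.
Proof.
  intros HW x. pose proof (W_dU _ _ _ _ _ HW) as HU. destruct HW as [Hs _].
  unfold g2. eexists.
  apply (is_derive_comp (Derive (Derive f)) U x); [apply smooth_d3; exact Hs| apply HU].
Qed.

Lemma W_exR1 f tau c U V : Wave f tau c U V -> forall x, ex_derive (R1 f tau c U V) x.
Proof.
  intros HW x.
  pose proof (W_dP1 _ _ _ _ _ HW) as H1. pose proof (W_dP2 _ _ _ _ _ HW) as H2.
  pose proof (W_dg _ _ _ _ _ HW) as Hg. pose proof (W_dg2 _ _ _ _ _ HW) as Hg2.
  pose proof (W_dQ1 _ _ _ _ _ HW) as H3. pose proof (W_dQ2 _ _ _ _ _ HW) as H4.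
  pose proof (W_dU _ _ _ _ _ HW) as HU.
  unfold R1. auto_derive.
  repeat split; try apply Hg2; eexists; eauto.
Qed.

Lemma W_exR2 f tau c U V : Wave f tau c U V -> forall x, ex_derive (R2 f tau c U V) x.
Proof.
  intros HW x.
  pose proof (W_dP1 _ _ _ _ _ HW) as H1. pose proof (W_dP2 _ _ _ _ _ HW) as H2.
  pose proof (W_dg _ _ _ _ _ HW) as Hg. pose proof (W_dg2 _ _ _ _ _ HW) as Hg2.
  pose proof (W_dQ1 _ _ _ _ _ HW) as H3. pose proof (W_dQ2 _ _ _ _ _ HW) as H4.
  pose proof (W_dU _ _ _ _ _ HW) as HU.
  unfold R2. auto_derive.
  repeat split; try apply Hg2; eexists; eauto.
Qed.

Lemma lim_comp_cont (U h : R -> R) (x : Rbar) (l : R) :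
  is_lim U x l -> continuous h l -> is_lim (fun y => h (U y)) x (h l).
Proof.
  intros HU Hh. unfold is_lim in *. simpl in *.
  exact (filterlim_comp _ _ _ U h (Rbar_locally' x) (locally l) (locally (h l)) HU Hh).
Qed.

Lemma lim_lin (A B : R -> R) (x : Rbar) (a b k1 k2 : R) :
  is_lim A x a -> is_lim B x b -> is_lim (fun y => k1 * A y + k2 * B y) x (k1 * a + k2 * b).
Proof.
  intros HA HB. apply (is_lim_plus' (fun y => k1 * A y) (fun y => k2 * B y) x (k1 * a) (k2 * b)).
  - exact (is_lim_scal_l A k1 x a HA).
  - exact (is_lim_scal_l B k2 x b HB).
Qed.

Lemma lim_ext' (A B : R -> R) (x : Rbar) (l : R) :
  (forall y, A y = B y) -> is_lim A x l -> is_lim B x l.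
Proof. intros He H. apply (is_lim_ext A B x l He H). Qed.

Lemma W_lims f tau c U V : Wave f tau c U V ->
  is_lim U m_infty 0 /\ is_lim U p_infty 1 /\ is_lim V m_infty 0 /\ is_lim V p_infty 0.
Proof. intros [_ [_ [_ [_ [_ [_ [H1 [H2 [H3 H4]]]]]]]]]. auto. Qed.

Lemma W_lim_g f tau c U V : Wave f tau c U V ->
  is_lim (gg f U) m_infty (Derive f 0) /\ is_lim (gg f U) p_infty (Derive f 1).
Proof.
  intros HW. destruct (W_lims _ _ _ _ _ HW) as [H1 [H2 _]]. destruct HW as [Hs _].
  unfold gg. split; apply (lim_comp_cont U (Derive f)); auto; eapply is_derive_cont; apply smooth_d2; exact Hs.
Qed.

Lemma W_lim_g2 f tau c U V : Wave f tau c U V ->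
  is_lim (g2 f U) m_infty (Derive (Derive f) 0) /\ is_lim (g2 f U) p_infty (Derive (Derive f) 1).
Proof.
  intros HW. destruct (W_lims _ _ _ _ _ HW) as [H1 [H2 _]]. destruct HW as [Hs _].
  unfold g2. split; apply (lim_comp_cont U (Derive (Derive f))); auto; eapply is_derive_cont; apply smooth_d3; exact Hs.
Qed.

Lemma W_f01 f tau c U V : Wave f tau c U V -> f 0 = 0 /\ f 1 = 0.
Proof. intros [_ [[al [_ [H0 [_ [H1 _]]]]] _]]. auto. Qed.

Lemma W_lim_fU f tau c U V : Wave f tau c U V ->
  is_lim (fun y => f (U y)) m_infty 0 /\ is_lim (fun y => f (U y)) p_infty 0.
Proof.
  intros HW. destruct (W_f01 _ _ _ _ _ HW) as [F0 F1].
  destruct (W_lims _ _ _ _ _ HW) as [H1 [H2 _]]. destruct HW as [Hs _].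
  split.
  - replace (Finite 0) with (Finite (f 0)) by (rewrite F0; reflexivity). apply lim_comp_cont; auto. eapply is_derive_cont; apply smooth_d1; exact Hs.
  - replace (Finite 0) with (Finite (f 1)) by (rewrite F1; reflexivity). apply lim_comp_cont; auto. eapply is_derive_cont; apply smooth_d1; exact Hs.
Qed.

Lemma W_lim_P f tau c U V : Wave f tau c U V ->
  is_lim (P1 U) m_infty 0 /\ is_lim (P1 U) p_infty 0 /\ is_lim (P1 V) m_infty 0 /\ is_lim (P1 V) p_infty 0.
Proof.
  intros HW. destruct (W_lim_fU _ _ _ _ _ HW) as [F1 F2].
  destruct (W_lims _ _ _ _ _ HW) as [_ [_ [H3 H4]]].
  pose proof (W_P1 _ _ _ _ _ HW) as HP1. pose proof (W_P2 _ _ _ _ _ HW) as HP2.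
  pose proof (W_d _ _ _ _ _ HW) as Hd.
  repeat split.
  - apply (lim_ext' (fun y => (- (c * tau) / dd c tau) * f (U y) + (- 1 / dd c tau) * V y));
      [intros y; rewrite HP1; field; exact Hd|].
    replace 0 with ((- (c * tau) / dd c tau) * 0 + (- 1 / dd c tau) * 0) by ring.
    apply lim_lin; auto.
  - apply (lim_ext' (fun y => (- (c * tau) / dd c tau) * f (U y) + (- 1 / dd c tau) * V y));
      [intros y; rewrite HP1; field; exact Hd|].
    replace 0 with ((- (c * tau) / dd c tau) * 0 + (- 1 / dd c tau) * 0) by ring.
    apply lim_lin; auto.
  - apply (lim_ext' (fun y => (1 / dd c tau) * f (U y) + (c / dd c tau) * V y));
      [intros y; rewrite HP2; field; exact Hd|].
    replace 0 with ((1 / dd c tau) * 0 + (c / dd c tau) * 0) by ring.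
    apply lim_lin; auto.
  - apply (lim_ext' (fun y => (1 / dd c tau) * f (U y) + (c / dd c tau) * V y));
      [intros y; rewrite HP2; field; exact Hd|].
    replace 0 with ((1 / dd c tau) * 0 + (c / dd c tau) * 0) by ring.
    apply lim_lin; auto.
Qed.


Definition Eform (p q r s X Y Z p1 p2 : R) :=
  2 * X * p1 * (p * p1 + q * p2) + 2 * Y * ((p * p1 + q * p2) * p2 + p1 * (r * p1 + s * p2))
  + 2 * Z * p2 * (r * p1 + s * p2).

Definition mp c tau g := - c * tau * g / dd c tau.
Definition mq c tau := - 1 / dd c tau.
Definition mr c tau g := g / dd c tau.
Definition ms c tau := c / dd c tau.

Lemma S_exists c tau a : 0 < tau -> a < 0 -> dd c tau <> 0 ->
  exists X Y Z k, 0 < k /\ forall p1 p2,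
    2 * k * (p1 ^ 2 + p2 ^ 2) <= Eform (mp c tau a) (mq c tau) (mr c tau a) (ms c tau) X Y Z p1 p2.
Proof.
  intros Ht Ha Hd.
  destruct (Req_dec c 0) as [Hc|Hc].
  - subst c. exists 0, (1/2), 0, (Rmin 1 (- a) / 2). split.
    + assert (0 < Rmin 1 (- a)) by (apply Rmin_pos; lra). lra.
    + intros p1 p2. unfold Eform, mp, mq, mr, ms, dd.
      replace (0 * 0 * tau - 1) with (-1) by ring.
      pose proof (Rmin_l 1 (- a)). pose proof (Rmin_r 1 (- a)).
      pose proof (pow2_ge_0 p1). pose proof (pow2_ge_0 p2).
      replace (2 * 0 * p1 * (- 0 * tau * a / -1 * p1 + -1 / -1 * p2) +
        2 * (1 / 2) * ((- 0 * tau * a / -1 * p1 + -1 / -1 * p2) * p2 + p1 * (a / -1 * p1 + 0 / -1 * p2)) +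
        2 * 0 * p2 * (a / -1 * p1 + 0 / -1 * p2)) with (p2 ^ 2 + (- a) * p1 ^ 2) by field.
      nra.
  - set (p := mp c tau a). set (q := mq c tau). set (r := mr c tau a). set (s := ms c tau).
    set (T := p + s). set (D := p * s - q * r).
    assert (HT : T <> 0).
    { unfold T, p, s, mp, ms. replace (- c * tau * a / dd c tau + c / dd c tau) with (c * (1 - tau * a) / dd c tau)
        by (field; exact Hd).
      intros H. apply Rmult_integral in H. destruct H as [H|H].
      - apply Rmult_integral in H. destruct H as [H|H]; [exact (Hc H)|nra].
      - apply Rinv_neq_0_compat in Hd. exact (Hd H). }
    assert (HD : D <> 0).
    { unfold D, p, q, r, s, mp, mq, mr, ms.
      replace (- c * tau * a / dd c tau * (c / dd c tau) - -1 / dd c tau * (a / dd c tau))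
        with (- a / dd c tau) by (unfold dd in *; field; exact Hd).
      intros H. apply Rmult_integral in H. destruct H as [H|H]; [lra|].
      apply Rinv_neq_0_compat in Hd. exact (Hd H). }
    set (De := T * D).
    assert (HDe : De <> 0) by (unfold De; apply Rmult_integral_contrapositive; auto).
    exists ((T * s - r * q + r * r) / (2 * De)), (- (p * r + q * s) / (2 * De)), ((p * T - r * q + q * q) / (2 * De)), (1/2).
    split; [lra|]. intros p1 p2.
    replace (Eform p q r s ((T * s - r * q + r * r) / (2 * De)) (- (p * r + q * s) / (2 * De))
      ((p * T - r * q + q * q) / (2 * De)) p1 p2) with (p1 ^ 2 + p2 ^ 2).
    + lra.
    + unfold Eform, De, D, T. field. split; [exact HD|exact HT].
Qed.

Lemma lim_mult0 (A B : R -> R) (x : Rbar) : is_lim A x 0 -> is_lim B x 0 -> is_lim (fun t => A t * B t) x 0.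
Proof.
  intros HA HB.
  replace (Finite 0) with (Rbar_mult (Finite 0) (Finite 0)) by (simpl; f_equal; ring).
  apply is_lim_mult; auto. simpl; exact I.
Qed.

Lemma lim_lin0 (A B : R -> R) (x : Rbar) k1 k2 : is_lim A x 0 -> is_lim B x 0 ->
  is_lim (fun y => k1 * A y + k2 * B y) x 0.
Proof.
  intros HA HB. assert (H := lim_lin A B x 0 0 k1 k2 HA HB).
  replace (k1 * 0 + k2 * 0) with 0 in H by ring. exact H.
Qed.

Lemma quad_lim (A B : R -> R) (x : Rbar) X Y Z : is_lim A x 0 -> is_lim B x 0 ->
  is_lim (fun t => X * A t ^ 2 + 2 * Y * A t * B t + Z * B t ^ 2) x 0.
Proof.
  intros HA HB.
  assert (H1 := lim_mult0 A A x HA HA). assert (H2 := lim_mult0 A B x HA HB).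
  assert (H3 := lim_mult0 B B x HB HB).
  assert (H4 := lim_lin0 _ _ x X (2 * Y) H1 H2).
  assert (H5 := lim_lin0 _ _ x 1 Z H4 H3).
  eapply lim_ext'; [|exact H5]. intros t; simpl; ring.
Qed.

Lemma Eform_pert c tau g a X Y Z p1 p2 : dd c tau <> 0 ->
  Eform (mp c tau a) (mq c tau) (mr c tau a) (ms c tau) X Y Z p1 p2
  - Rabs (g - a) * (Rabs (- 2 * X * c * tau / dd c tau + 2 * Y / dd c tau) + Rabs (- 2 * Y * c * tau / dd c tau + 2 * Z / dd c tau)) * (p1 ^ 2 + p2 ^ 2)
  <= Eform (mp c tau g) (mq c tau) (mr c tau g) (ms c tau) X Y Z p1 p2.
Proof.
  intros Hd.
  set (A := - 2 * X * c * tau / dd c tau + 2 * Y / dd c tau).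
  set (B := - 2 * Y * c * tau / dd c tau + 2 * Z / dd c tau).
  assert (He : Eform (mp c tau g) (mq c tau) (mr c tau g) (ms c tau) X Y Z p1 p2
     = Eform (mp c tau a) (mq c tau) (mr c tau a) (ms c tau) X Y Z p1 p2 + (g - a) * (A * p1 ^ 2 + B * (p1 * p2))).
  { unfold Eform, mp, mq, mr, ms, A, B. field. exact Hd. }
  rewrite He.
  assert (Rabs ((g - a) * (A * p1 ^ 2 + B * (p1 * p2))) <= Rabs (g - a) * ((Rabs A + Rabs B) * (p1 ^ 2 + p2 ^ 2))).
  { rewrite Rabs_mult. apply Rmult_le_compat_l; [apply Rabs_pos|].
    pose proof (cross_bound B p1 p2 (Rabs B) (Rle_refl _)).
    pose proof (diag_bound A p1 (Rabs A) (Rle_refl _)).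
    pose proof (pow2_ge_0 p2). pose proof (Rabs_pos A). pose proof (Rabs_pos B).
    apply Rabs_le. split; nra. }
  apply Rabs_le_between in H. nra.
Qed.

Lemma W_Q1eq f tau c U V : Wave f tau c U V -> forall x,
  Q1 f tau c U V x = mp c tau (gg f U x) * P1 U x + mq c tau * P1 V x.
Proof. intros HW x. pose proof (W_d _ _ _ _ _ HW). unfold Q1, mp, mq. field. auto. Qed.

Lemma W_Q2eq f tau c U V : Wave f tau c U V -> forall x,
  Q2 f tau c U V x = mr c tau (gg f U x) * P1 U x + ms c tau * P1 V x.
Proof. intros HW x. pose proof (W_d _ _ _ _ _ HW). unfold Q2, mr, ms. field. auto. Qed.

Definition Gsq U V x := P1 U x ^ 2 + P1 V x ^ 2.

Lemma W_dQf f tau c U V X Y Z : Wave f tau c U V -> forall x,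
  is_derive (fun t => X * P1 U t ^ 2 + 2 * Y * P1 U t * P1 V t + Z * P1 V t ^ 2) x
    (Eform (mp c tau (gg f U x)) (mq c tau) (mr c tau (gg f U x)) (ms c tau) X Y Z (P1 U x) (P1 V x)).
Proof.
  intros HW x. pose proof (W_dP1 _ _ _ _ _ HW x) as H1. pose proof (W_dP2 _ _ _ _ _ HW x) as H2.
  auto_derive.
  - repeat split; try exact I; eexists; first [exact H1 | exact H2].
  - rewrite (Dval _ x _ H1), (Dval _ x _ H2). rewrite (W_Q1eq _ _ _ _ _ HW x), (W_Q2eq _ _ _ _ _ HW x).
    unfold Eform. ring.
Qed.

Lemma W_contG f tau c U V : Wave f tau c U V -> forall x, continuous (Gsq U V) x.
Proof.
  intros HW x. pose proof (W_dP1 _ _ _ _ _ HW x) as H1. pose proof (W_dP2 _ _ _ _ _ HW x) as H2.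
  apply (@ex_derive_continuous R_AbsRing R_NormedModule). unfold Gsq. auto_derive.
  repeat split; try exact I; eexists; first [exact H1 | exact H2].
Qed.

Lemma Gsq_pos U V x : 0 <= Gsq U V x.
Proof. unfold Gsq. pose proof (pow2_ge_0 (P1 U x)). pose proof (pow2_ge_0 (P1 V x)). lra. Qed.

Lemma W_bist_d f tau c U V : Wave f tau c U V -> Derive f 0 < 0 /\ Derive f 1 < 0.
Proof. intros [_ [[al [_ [_ [_ [_ [H0 [H1 _]]]]]]] _]]. auto. Qed.

Lemma W_tau f tau c U V : Wave f tau c U V -> 0 < tau.
Proof. intros [_ [_ [H _]]]. exact H. Qed.

Lemma W_tail_p f tau c U V : Wave f tau c U V ->
  exists X0 B0, forall a b, X0 <= a -> a <= b -> RInt (Gsq U V) a b <= B0.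
Proof.
  intros HW. destruct (W_bist_d _ _ _ _ _ HW) as [_ Ha1].
  pose proof (W_d _ _ _ _ _ HW) as Hd.
  destruct (S_exists c tau (Derive f 1) (W_tau _ _ _ _ _ HW) Ha1 Hd) as [X [Y [Z [k [Hk HE]]]]].
  set (K := Rabs (- 2 * X * c * tau / dd c tau + 2 * Y / dd c tau) + Rabs (- 2 * Y * c * tau / dd c tau + 2 * Z / dd c tau)).
  assert (HK : 0 <= K) by (unfold K; pose proof (Rabs_pos (- 2 * X * c * tau / dd c tau + 2 * Y / dd c tau));
    pose proof (Rabs_pos (- 2 * Y * c * tau / dd c tau + 2 * Z / dd c tau)); lra).
  destruct (W_lim_g _ _ _ _ _ HW) as [_ Hg].
  destruct (lim_p_eps _ _ Hg (k / (K + 1)) ltac:(apply Rdiv_lt_0_compat; lra)) as [M HM].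
  destruct (W_lim_P _ _ _ _ _ HW) as [_ [Hp1 [_ Hp2]]].
  set (Qf := fun t => X * P1 U t ^ 2 + 2 * Y * P1 U t * P1 V t + Z * P1 V t ^ 2).
  exists (M + 1), (- Qf (M + 1) / k).
  apply (tail_p Qf _ (Gsq U V) k (M + 1) Hk (W_contG _ _ _ _ _ HW) (Gsq_pos U V)
    (W_dQf f tau c U V X Y Z HW) (quad_lim _ _ _ X Y Z Hp1 Hp2)).
  intros t Ht.
  specialize (HM t ltac:(lra)).
  pose proof (Eform_pert c tau (gg f U t) (Derive f 1) X Y Z (P1 U t) (P1 V t) Hd) as Hp.
  fold K in Hp. specialize (HE (P1 U t) (P1 V t)).
  fold (Gsq U V t) in Hp, HE. pose proof (Gsq_pos U V t).
  assert (Rabs (gg f U t - Derive f 1) * K <= k).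
  { apply Rle_trans with (k / (K + 1) * K).
    - apply Rmult_le_compat_r; lra.
    - apply (Rmult_le_reg_r (K + 1)); [lra|]. field_simplify; [|lra]. nra. }
  nra.
Qed.

Lemma W_tail_m f tau c U V : Wave f tau c U V ->
  exists X0 B0, forall a b, a <= b -> b <= X0 -> RInt (Gsq U V) a b <= B0.
Proof.
  intros HW. destruct (W_bist_d _ _ _ _ _ HW) as [Ha0 _].
  pose proof (W_d _ _ _ _ _ HW) as Hd.
  destruct (S_exists c tau (Derive f 0) (W_tau _ _ _ _ _ HW) Ha0 Hd) as [X [Y [Z [k [Hk HE]]]]].
  set (K := Rabs (- 2 * X * c * tau / dd c tau + 2 * Y / dd c tau) + Rabs (- 2 * Y * c * tau / dd c tau + 2 * Z / dd c tau)).
  assert (HK : 0 <= K) by (unfold K; pose proof (Rabs_pos (- 2 * X * c * tau / dd c tau + 2 * Y / dd c tau));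
    pose proof (Rabs_pos (- 2 * Y * c * tau / dd c tau + 2 * Z / dd c tau)); lra).
  destruct (W_lim_g _ _ _ _ _ HW) as [Hg _].
  destruct (lim_m_eps _ _ Hg (k / (K + 1)) ltac:(apply Rdiv_lt_0_compat; lra)) as [M HM].
  destruct (W_lim_P _ _ _ _ _ HW) as [Hp1 [_ [Hp2 _]]].
  set (Qf := fun t => X * P1 U t ^ 2 + 2 * Y * P1 U t * P1 V t + Z * P1 V t ^ 2).
  exists (M - 1), (Qf (M - 1) / k).
  apply (tail_m Qf _ (Gsq U V) k (M - 1) Hk (W_contG _ _ _ _ _ HW) (Gsq_pos U V)
    (W_dQf f tau c U V X Y Z HW) (quad_lim _ _ _ X Y Z Hp1 Hp2)).
  intros t Ht.
  specialize (HM t ltac:(lra)).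
  pose proof (Eform_pert c tau (gg f U t) (Derive f 0) X Y Z (P1 U t) (P1 V t) Hd) as Hp.
  fold K in Hp. specialize (HE (P1 U t) (P1 V t)).
  fold (Gsq U V t) in Hp, HE. pose proof (Gsq_pos U V t).
  assert (Rabs (gg f U t - Derive f 0) * K <= k).
  { apply Rle_trans with (k / (K + 1) * K).
    - apply Rmult_le_compat_r; lra.
    - apply (Rmult_le_reg_r (K + 1)); [lra|]. field_simplify; [|lra]. nra. }
  nra.
Qed.

Lemma W_L2P f tau c U V : Wave f tau c U V ->
  exists B, forall a b, a <= b -> RInt (Gsq U V) a b <= B.
Proof.
  intros HW. destruct (W_tail_p _ _ _ _ _ HW) as [X2 [B2 H2]].
  destruct (W_tail_m _ _ _ _ _ HW) as [X1 [B1 H1]].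
  apply (bounded_int_of_tails (Gsq U V) X1 X2 B1 B2 (W_contG _ _ _ _ _ HW) (Gsq_pos U V)); auto.
Qed.


Lemma is_derive_C_re (h : R -> C) x (l : C) :
  is_derive h x l -> is_derive (fun t => fst (h t)) x (fst l).
Proof.
  intros H. unfold is_derive in *.
  apply (filterdiff_comp' h (fun t : C => fst t) x _ (fun t : C => fst t)) in H.
  - exact H.
  - apply filterdiff_linear. apply is_linear_fst.
Qed.

Lemma is_derive_C_im (h : R -> C) x (l : C) :
  is_derive h x l -> is_derive (fun t => snd (h t)) x (snd l).
Proof.
  intros H. unfold is_derive in *.
  apply (filterdiff_comp' h (fun t : C => snd t) x _ (fun t : C => snd t)) in H.
  - exact H.
  - apply filterdiff_linear. apply is_linear_snd.
Qed.

Lemma is_derive_C_mk (f g : R -> R) x a b :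
  is_derive f x a -> is_derive g x b -> is_derive (fun t => (f t, g t) : C) x ((a, b) : C).
Proof.
  intros Hf Hg. unfold is_derive in *.
  apply (filterdiff_comp'_2 f g (fun u v => (u, v) : C) x _ _ (fun u v => (u, v) : C) Hf Hg).
  apply filterdiff_linear. split.
  - intros [] []. reflexivity.
  - intros k []. reflexivity.
  - exists 1. split. lra. intros []. rewrite Rmult_1_l. right. reflexivity.
Qed.

Lemma is_derive_RtoC (h : R -> R) x l : is_derive h x l -> is_derive (fun t => RtoC (h t)) x (RtoC l).
Proof. intros H. unfold RtoC. apply is_derive_C_mk; [exact H|]. apply (@is_derive_const R_AbsRing R_NormedModule). Qed.

Lemma cont_RtoC (h : R -> R) x : ex_derive h x -> continuous (fun t => RtoC (h t)) x.
Proof.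
  intros [l H]. apply (@ex_derive_continuous R_AbsRing (prod_NormedModule R_AbsRing R_NormedModule R_NormedModule)).
  exists (RtoC l). apply is_derive_RtoC. exact H.
Qed.

Lemma Cmod_sq (z : C) : Cmod z ^ 2 = fst z ^ 2 + snd z ^ 2.
Proof.
  unfold Cmod. rewrite pow2_sqrt; [reflexivity|].
  pose proof (pow2_ge_0 (fst z)). pose proof (pow2_ge_0 (snd z)). lra.
Qed.

Lemma L2C_RtoC (h : R -> R) :
  ex_RInt_gen (fun x => h x ^ 2) (Rbar_locally m_infty) (Rbar_locally p_infty) ->
  L2C (fun x => RtoC (h x)).
Proof.
  intros H. unfold L2C. apply (ex_RInt_gen_ext_eq (fun x => h x ^ 2)); [|exact H].
  intros x. rewrite Cmod_sq. simpl. ring.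
Qed.

Definition bnd (h : R -> R) := exists K, forall x, Rabs (h x) <= K.

Lemma bnd_const k : bnd (fun _ => k).
Proof. exists (Rabs k). intros; lra. Qed.

Lemma bnd_plus h1 h2 : bnd h1 -> bnd h2 -> bnd (fun x => h1 x + h2 x).
Proof.
  intros [K1 H1] [K2 H2]. exists (K1 + K2). intros x.
  eapply Rle_trans; [apply Rabs_triang|]. specialize (H1 x). specialize (H2 x). lra.
Qed.

Lemma bnd_mult h1 h2 : bnd h1 -> bnd h2 -> bnd (fun x => h1 x * h2 x).
Proof.
  intros [K1 H1] [K2 H2]. exists (K1 * K2). intros x. rewrite Rabs_mult.
  apply Rmult_le_compat; try apply Rabs_pos; auto.
Qed.

Lemma bnd_ext h1 h2 : (forall x, h1 x = h2 x) -> bnd h1 -> bnd h2.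
Proof. intros He [K H]. exists K. intros x. rewrite <- He. apply H. Qed.

Lemma lin_sq_bound (h al be p q : R -> R) :
  bnd al -> bnd be -> (forall x, h x = al x * p x + be x * q x) ->
  exists C, 0 <= C /\ forall x, h x ^ 2 <= C * (p x ^ 2 + q x ^ 2).
Proof.
  intros [K1 H1] [K2 H2] He.
  exists (2 * (K1 ^ 2 + K2 ^ 2)). split; [nra|]. intros x. rewrite He.
  specialize (H1 x). specialize (H2 x).
  assert (al x ^ 2 <= K1 ^ 2).
  { rewrite <- (pow2_abs (al x)). pose proof (Rabs_pos (al x)). nra. }
  assert (be x ^ 2 <= K2 ^ 2).
  { rewrite <- (pow2_abs (be x)). pose proof (Rabs_pos (be x)). nra. }
  pose proof (pow2_ge_0 (p x)). pose proof (pow2_ge_0 (q x)).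
  pose proof (pow2_ge_0 (al x * p x - be x * q x)).
  nra.
Qed.

Lemma L2_of_dom (h G : R -> R) C :
  (forall x, continuous h x) -> (forall x, continuous G x) -> 0 <= C ->
  (forall x, h x ^ 2 <= C * G x) ->
  (exists B, forall a b, a <= b -> RInt G a b <= B) ->
  ex_RInt_gen (fun x => h x ^ 2) (Rbar_locally m_infty) (Rbar_locally p_infty).
Proof.
  intros Hh HG HC Hd [B HB].
  assert (Hc2 : forall x, continuous (fun x => h x ^ 2) x).
  { intros x. simpl.
    apply (continuous_mult (fun x => h x) (fun x => h x * 1)); [apply Hh|].
    apply (continuous_mult (fun x => h x) (fun _ => 1)); [apply Hh|apply continuous_const]. }
  apply RInt_gen_of_bounded; [exact Hc2|intros; apply pow2_ge_0|].
  exists (C * B). intros a b Hab.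
  apply Rle_trans with (RInt (fun x => C * G x) a b).
  - apply RInt_le; auto; try apply ex_RInt_cont; auto.
    intros x. apply (continuous_scal_r C G x). apply HG.
  - assert (E : RInt (fun x => C * G x) a b = C * RInt G a b)
      by exact (@RInt_scal R_CompleteNormedModule G a b C (ex_RInt_cont G a b HG)).
    rewrite E. apply Rmult_le_compat_l; auto.
Qed.

Lemma W_bnds f tau c U V : Wave f tau c U V ->
  bnd (gg f U) /\ bnd (g2 f U) /\ bnd (P1 U) /\ bnd (P1 V).
Proof.
  intros HW.
  destruct (W_lim_g _ _ _ _ _ HW) as [Hg1 Hg2].
  destruct (W_lim_g2 _ _ _ _ _ HW) as [Hh1 Hh2].
  destruct (W_lim_P _ _ _ _ _ HW) as [Hp1 [Hp2 [Hp3 Hp4]]].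
  pose proof (W_dg _ _ _ _ _ HW) as Dg. pose proof (W_dg2 _ _ _ _ _ HW) as Dg2.
  pose proof (W_dP1 _ _ _ _ _ HW) as D1. pose proof (W_dP2 _ _ _ _ _ HW) as D2.
  repeat split.
  - eapply bounded_of_lims; [|exact Hg1|exact Hg2]. intros x; eapply is_derive_cont_pt; apply Dg.
  - eapply bounded_of_lims; [|exact Hh1|exact Hh2]. intros x; destruct (Dg2 x) as [l Hl]; eapply is_derive_cont_pt; exact Hl.
  - eapply bounded_of_lims; [|exact Hp1|exact Hp2]. intros x; eapply is_derive_cont_pt; apply D1.
  - eapply bounded_of_lims; [|exact Hp3|exact Hp4]. intros x; eapply is_derive_cont_pt; apply D2.
Qed.

Ltac bndt := repeat first [apply bnd_plus | apply bnd_mult | apply bnd_const | assumption].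

Lemma W_H2C_gen f tau c U V (h h1 h2 : R -> R) (a1 b1 a2 b2 : R -> R) :
  Wave f tau c U V ->
  (forall x, is_derive h x (h1 x)) -> (forall x, is_derive h1 x (h2 x)) -> (forall x, ex_derive h2 x) ->
  (forall x, h x ^ 2 <= Gsq U V x) ->
  bnd a1 -> bnd b1 -> (forall x, h1 x = a1 x * P1 U x + b1 x * P1 V x) ->
  bnd a2 -> bnd b2 -> (forall x, h2 x = a2 x * P1 U x + b2 x * P1 V x) ->
  H2C (fun x => RtoC (h x)).
Proof.
  intros HW Dh Dh1 Dh2 Hb0 Ha1 Hb1 E1 Ha2 Hb2 E2.
  destruct (W_L2P _ _ _ _ _ HW) as [B HB].
  pose proof (W_contG _ _ _ _ _ HW) as HG.
  exists (fun x => RtoC (h1 x)), (fun x => RtoC (h2 x)).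
  split; [|split; [|split; [|split; [|split]]]].
  - intros x. apply is_derive_RtoC. apply Dh.
  - intros x. apply is_derive_RtoC. apply Dh1.
  - intros x. apply cont_RtoC. apply Dh2.
  - apply L2C_RtoC. apply (L2_of_dom h (Gsq U V) 1); auto; [|lra|intros; rewrite Rmult_1_l; auto|exists B; auto].
    intros x. apply (@ex_derive_continuous R_AbsRing R_NormedModule). eexists; apply Dh.
  - apply L2C_RtoC. destruct (lin_sq_bound h1 a1 b1 (P1 U) (P1 V) Ha1 Hb1 E1) as [C [HC HCb]].
    apply (L2_of_dom h1 (Gsq U V) C); auto; [|exists B; auto].
    intros x. apply (@ex_derive_continuous R_AbsRing R_NormedModule). eexists; apply Dh1.
  - apply L2C_RtoC. destruct (lin_sq_bound h2 a2 b2 (P1 U) (P1 V) Ha2 Hb2 E2) as [C [HC HCb]].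
    apply (L2_of_dom h2 (Gsq U V) C); auto; [|exists B; auto].
    intros x. apply (@ex_derive_continuous R_AbsRing R_NormedModule). apply Dh2.
Qed.

Lemma W_H2C2 f tau c U V : Wave f tau c U V ->
  H2C2 (fun x => (RtoC (Derive U x), RtoC (Derive V x))).
Proof.
  intros HW. pose proof (W_d _ _ _ _ _ HW) as Hd.
  destruct (W_bnds _ _ _ _ _ HW) as [Bg [Bg2 [BP1 BP2]]].
  pose proof (W_Q1eq _ _ _ _ _ HW) as E1. pose proof (W_Q2eq _ _ _ _ _ HW) as E2.
  split; simpl.
  - apply (W_H2C_gen f tau c U V (P1 U) (Q1 f tau c U V) (R1 f tau c U V)
      (fun x => mp c tau (gg f U x)) (fun _ => mq c tau)
      (fun x => - (c * tau * (g2 f U x * P1 U x + gg f U x * mp c tau (gg f U x)) + mr c tau (gg f U x)) / dd c tau)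
      (fun x => - (c * tau * gg f U x * mq c tau + ms c tau) / dd c tau)); auto.
    + apply W_dP1; auto.
    + apply W_dQ1; auto.
    + apply W_exR1; auto.
    + intros x. unfold Gsq. pose proof (pow2_ge_0 (P1 V x)). lra.
    + apply (bnd_ext (fun x => (- c * tau / dd c tau) * gg f U x)); [intros; unfold mp; field; auto|]. bndt.
    + apply bnd_const.
    + apply (bnd_ext (fun x => (- (c * tau) / dd c tau) * (g2 f U x * P1 U x)
         + (c * tau * c * tau / (dd c tau * dd c tau)) * (gg f U x * gg f U x)
         + (- 1 / (dd c tau * dd c tau)) * gg f U x)); [intros; unfold mp, mr; field; auto|]. bndt.
    + apply (bnd_ext (fun x => (- (c * tau * mq c tau) / dd c tau) * gg f U x + (- ms c tau / dd c tau)));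
        [intros; field; auto|]. bndt.
    + intros x. unfold R1. rewrite E1, E2. field. auto.
  - apply (W_H2C_gen f tau c U V (P1 V) (Q2 f tau c U V) (R2 f tau c U V)
      (fun x => mr c tau (gg f U x)) (fun _ => ms c tau)
      (fun x => (g2 f U x * P1 U x + gg f U x * mp c tau (gg f U x) + c * mr c tau (gg f U x)) / dd c tau)
      (fun x => (gg f U x * mq c tau + c * ms c tau) / dd c tau)); auto.
    + apply W_dP2; auto.
    + apply W_dQ2; auto.
    + apply W_exR2; auto.
    + intros x. unfold Gsq. pose proof (pow2_ge_0 (P1 U x)). lra.
    + apply (bnd_ext (fun x => (1 / dd c tau) * gg f U x)); [intros; unfold mr; field; auto|]. bndt.
    + apply bnd_const.
    + apply (bnd_ext (fun x => (1 / dd c tau) * (g2 f U x * P1 U x)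
         + (- c * tau / (dd c tau * dd c tau)) * (gg f U x * gg f U x)
         + (c / (dd c tau * dd c tau)) * gg f U x)); [intros; unfold mp, mr; field; auto|]. bndt.
    + apply (bnd_ext (fun x => (- 1 / (dd c tau * dd c tau)) * gg f U x + c * c / (dd c tau * dd c tau)));
        [intros; unfold mq, ms; field; auto|]. bndt.
    + intros x. unfold R2. rewrite E1, E2. field. auto.
Qed.


Lemma W_Mbound f tau c U V : Wave f tau c U V -> exists L, forall x,
  Rabs (mp c tau (gg f U x)) <= L /\ Rabs (mq c tau) <= L /\ Rabs (mr c tau (gg f U x)) <= L /\ Rabs (ms c tau) <= L.
Proof.
  intros HW. pose proof (W_d _ _ _ _ _ HW) as Hd.
  destruct (W_bnds _ _ _ _ _ HW) as [Bg _].
  assert (B1 : bnd (fun x => mp c tau (gg f U x))).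
  { apply (bnd_ext (fun x => (- c * tau / dd c tau) * gg f U x)); [intros; unfold mp; field; auto|]. bndt. }
  assert (B2 : bnd (fun x => mr c tau (gg f U x))).
  { apply (bnd_ext (fun x => (1 / dd c tau) * gg f U x)); [intros; unfold mr; field; auto|]. bndt. }
  destruct B1 as [K1 H1]. destruct B2 as [K2 H2].
  exists (Rabs K1 + Rabs K2 + Rabs (mq c tau) + Rabs (ms c tau)). intros x.
  specialize (H1 x). specialize (H2 x).
  pose proof (Rle_abs K1). pose proof (Rle_abs K2). pose proof (Rabs_pos K1). pose proof (Rabs_pos K2).
  pose proof (Rabs_pos (mq c tau)). pose proof (Rabs_pos (ms c tau)).
  repeat split; lra.
Qed.

Lemma is_derive_oppR (h : R -> R) x l : is_derive h x l -> is_derive (fun t => - h t) x (- l).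
Proof. intros H. exact (@is_derive_opp R_AbsRing R_NormedModule h x l H). Qed.

Lemma W_U_nonconst f tau c U V : Wave f tau c U V -> ~ (forall x, P1 U x = 0).
Proof.
  intros HW H0. pose proof (W_dU _ _ _ _ _ HW) as HU.
  assert (Hc : forall x, U x = U 0).
  { intros x. apply Rle_antisym.
    - destruct (Rle_dec x 0).
      + apply (incr_of_deriv U (fun _ => 0) x 0); auto. intros t _. rewrite <- (H0 t). apply HU. intros; lra.
      + apply Ropp_le_cancel. apply (incr_of_deriv (fun t => - U t) (fun _ => - 0) 0 x); [lra| |intros; lra].
        intros t _. apply is_derive_oppR. rewrite <- (H0 t). apply HU.
    - destruct (Rle_dec x 0).
      + apply Ropp_le_cancel. apply (incr_of_deriv (fun t => - U t) (fun _ => - 0) x 0); [lra| |intros; lra].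
        intros t _. apply is_derive_oppR. rewrite <- (H0 t). apply HU.
      + apply (incr_of_deriv U (fun _ => 0) 0 x); [lra| |intros; lra]. intros t _. rewrite <- (H0 t). apply HU. }
  destruct (W_lims _ _ _ _ _ HW) as [Hm [Hp _]].
  destruct (lim_m_eps U 0 Hm (1/3) ltac:(lra)) as [M1 HM1].
  destruct (lim_p_eps U 1 Hp (1/3) ltac:(lra)) as [M2 HM2].
  specialize (HM1 (M1 - 1) ltac:(lra)). specialize (HM2 (M2 + 1) ltac:(lra)).
  rewrite Hc in HM1, HM2. apply Rabs_lt_between in HM1. apply Rabs_lt_between in HM2. lra.
Qed.

Lemma W_Phi_nz f tau c U V : Wave f tau c U V -> forall x, P1 U x <> 0 \/ P1 V x <> 0.
Proof.
  intros HW x0.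
  destruct (Req_dec (P1 U x0) 0) as [H1|H1]; [|left; exact H1].
  destruct (Req_dec (P1 V x0) 0) as [H2|H2]; [|right; exact H2].
  exfalso. apply (W_U_nonconst _ _ _ _ _ HW).
  destruct (W_Mbound _ _ _ _ _ HW) as [L HL].
  intros x.
  apply (proj1 (lin_unique (P1 U) (P1 V) (fun x => mp c tau (gg f U x)) (fun _ => mq c tau)
    (fun x => mr c tau (gg f U x)) (fun _ => ms c tau) L x0
    (fun x => eq_ind _ _ (W_dP1 _ _ _ _ _ HW x) _ (W_Q1eq _ _ _ _ _ HW x))
    (fun x => eq_ind _ _ (W_dP2 _ _ _ _ _ HW x) _ (W_Q2eq _ _ _ _ _ HW x))
    HL H1 H2 x)).
Qed.

Lemma W_real_kernel f tau c U V (y1 y2 h : R -> R) B : Wave f tau c U V ->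
  (forall x, is_derive y1 x (mp c tau (gg f U x) * y1 x + mq c tau * y2 x)) ->
  (forall x, is_derive y2 x (mr c tau (gg f U x) * y1 x + ms c tau * y2 x)) ->
  (forall x, y1 x ^ 2 + y2 x ^ 2 <= h x) ->
  (forall a b, a <= b -> ex_RInt h a b /\ RInt h a b <= B) ->
  exists k, forall x, y1 x = k * P1 U x /\ y2 x = k * P1 V x.
Proof.
  intros HW D1 D2 Hh HB.
  pose proof (W_d _ _ _ _ _ HW) as Hd.
  pose proof (W_tau _ _ _ _ _ HW) as Ht.
  destruct (W_bnds _ _ _ _ _ HW) as [_ [_ [[K1 HK1] [K2 HK2]]]].
  set (W := fun x => P1 U x * y2 x - P1 V x * y1 x).
  set (T := fun x => mp c tau (gg f U x) + ms c tau).
  assert (DW : forall x, is_derive W x (T x * W x)).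
  { intros x. pose proof (W_dP1 _ _ _ _ _ HW x) as H1. pose proof (W_dP2 _ _ _ _ _ HW x) as H2.
    unfold W. auto_derive.
    - repeat split; try exact I; eexists; first [exact H1|exact H2|apply D1|apply D2].
    - rewrite (Dval _ x _ H1), (Dval _ x _ H2), (Dval _ x _ (D1 x)), (Dval _ x _ (D2 x)).
      rewrite (W_Q1eq _ _ _ _ _ HW x), (W_Q2eq _ _ _ _ _ HW x). unfold T. ring. }
  set (Kp := K1 ^ 2 + K2 ^ 2 + 1).
  assert (HKp : 0 < Kp) by (unfold Kp; pose proof (pow2_ge_0 K1); pose proof (pow2_ge_0 K2); lra).
  assert (HWb : forall x, W x ^ 2 <= Kp * h x).
  { intros x. specialize (HK1 x). specialize (HK2 x). specialize (Hh x).
    assert (P1 U x ^ 2 <= K1 ^ 2) by (rewrite <- (pow2_abs (P1 U x)); pose proof (Rabs_pos (P1 U x)); nra).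
    assert (P1 V x ^ 2 <= K2 ^ 2) by (rewrite <- (pow2_abs (P1 V x)); pose proof (Rabs_pos (P1 V x)); nra).
    assert (W x ^ 2 <= (P1 U x ^ 2 + P1 V x ^ 2) * (y1 x ^ 2 + y2 x ^ 2)).
    { unfold W. pose proof (pow2_ge_0 (P1 U x * y1 x + P1 V x * y2 x)). nra. }
    pose proof (pow2_ge_0 (y1 x)). pose proof (pow2_ge_0 (y2 x)).
    pose proof (pow2_ge_0 (P1 U x)). pose proof (pow2_ge_0 (P1 V x)).
    unfold Kp. nra. }
  assert (Hsign : (exists X, forall t, X <= t -> 0 <= T t) \/ (exists X, forall t, t <= X -> T t <= 0)).
  { assert (HT : forall t, T t = c / dd c tau * (1 - tau * gg f U t)).
    { intros t. unfold T, mp, ms. field. exact Hd. }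
    destruct (W_bist_d _ _ _ _ _ HW) as [Ha0 Ha1].
    destruct (W_lim_g _ _ _ _ _ HW) as [Hg0 Hg1].
    destruct (Rle_dec 0 (c / dd c tau)) as [Hs|Hs].
    - left. destruct (lim_p_eps _ _ Hg1 (- Derive f 1) ltac:(lra)) as [M HM].
      exists (M + 1). intros t Htt. specialize (HM t ltac:(lra)). apply Rabs_lt_between in HM.
      rewrite HT. apply Rmult_le_pos; [exact Hs|nra].
    - right. destruct (lim_m_eps _ _ Hg0 (- Derive f 0) ltac:(lra)) as [M HM].
      exists (M - 1). intros t Htt. specialize (HM t ltac:(lra)). apply Rabs_lt_between in HM.
      rewrite HT. assert (0 <= 1 - tau * gg f U t) by nra. nra. }
  destruct (W_zero W T h Kp B DW HKp HWb HB Hsign) as [x1 Hx1].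
  assert (Hk : exists k, y1 x1 = k * P1 U x1 /\ y2 x1 = k * P1 V x1).
  { unfold W in Hx1. destruct (W_Phi_nz _ _ _ _ _ HW x1) as [Hn|Hn].
    - exists (y1 x1 / P1 U x1). split; [field; exact Hn|].
      apply (Rmult_eq_reg_l (P1 U x1)); [|exact Hn]. field_simplify; [|exact Hn]. lra.
    - exists (y2 x1 / P1 V x1). split; [|field; exact Hn].
      apply (Rmult_eq_reg_l (P1 V x1)); [|exact Hn]. field_simplify; [|exact Hn]. lra. }
  destruct Hk as [k [Hk1 Hk2]]. exists k.
  destruct (W_Mbound _ _ _ _ _ HW) as [L HL].
  assert (Z := lin_unique (fun x => y1 x - k * P1 U x) (fun x => y2 x - k * P1 V x)
    (fun x => mp c tau (gg f U x)) (fun _ => mq c tau)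
    (fun x => mr c tau (gg f U x)) (fun _ => ms c tau) L x1).
  intros x. destruct (Z) with (x := x) as [Z1 Z2].
  - intros t. pose proof (W_dP1 _ _ _ _ _ HW t) as H1. auto_derive.
    + repeat split; try exact I; eexists; first [exact H1|apply D1].
    + rewrite (Dval _ t _ H1), (Dval _ t _ (D1 t)). rewrite (W_Q1eq _ _ _ _ _ HW t). ring.
  - intros t. pose proof (W_dP2 _ _ _ _ _ HW t) as H2. auto_derive.
    + repeat split; try exact I; eexists; first [exact H2|apply D2].
    + rewrite (Dval _ t _ H2), (Dval _ t _ (D2 t)). rewrite (W_Q2eq _ _ _ _ _ HW t). ring.
  - exact HL.
  - simpl. lra.
  - simpl. lra.
  - simpl in Z1, Z2. split; lra.
Qed.


Lemma solve2 c tau g w1 w2 a b : dd c tau <> 0 ->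
  c * a + b + g * w1 = 0 -> a + c * tau * b - w2 = 0 ->
  a = mp c tau g * w1 + mq c tau * w2 /\ b = mr c tau g * w1 + ms c tau * w2.
Proof.
  intros Hd E1 E2. unfold mp, mq, mr, ms.
  assert (Hb : b = - c * a - g * w1) by lra.
  rewrite Hb in E2.
  assert (Ha : a * dd c tau = - c * tau * g * w1 - w2).
  { unfold dd. replace (a * (c * c * tau - 1)) with (- (a + c * tau * (- c * a - g * w1) - w2) - c * tau * g * w1 - w2) by ring.
    rewrite E2. ring. }
  split.
  - apply (Rmult_eq_reg_r (dd c tau)); [|exact Hd]. rewrite Ha. field. exact Hd.
  - rewrite Hb. apply (Rmult_eq_reg_r (dd c tau)); [|exact Hd].
    replace ((- c * a - g * w1) * dd c tau) with (- c * (a * dd c tau) - g * w1 * dd c tau) by ring.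
    rewrite Ha. field_simplify; [|exact Hd]. unfold dd. ring.
Qed.

Lemma L2C_bound (h : R -> C) : L2C h ->
  exists B, forall a b, a <= b -> ex_RInt (fun x => Cmod (h x) ^ 2) a b /\ RInt (fun x => Cmod (h x) ^ 2) a b <= B.
Proof. intros H. apply bound_of_RInt_gen; [exact H|intros; apply pow2_ge_0]. Qed.

Theorem lemma3p7 (f : R -> R) (Hsmooth : smooth f) (Hbist : bistable f)
  (tau : R) (Htau : 0 < tau < tau_m f)
  (c : R) (U V : R -> R) (Hwave : traveling_wave f tau c U V) :
  let Phi : R -> C * C := fun x => (RtoC (Derive U x), RtoC (Derive V x)) in
  H2C2 Phi /\
  (exists x, Phi x <> (RtoC 0, RtoC 0)) /\
  is_Lop f c tau U Phi (fun _ => (RtoC 0, RtoC 0)) /\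
  (forall w : R -> C * C,
     H2C2 w -> is_Lop f c tau U w (fun _ => (RtoC 0, RtoC 0)) ->
     exists k : C, forall x, w x = (Cmult k (fst (Phi x)), Cmult k (snd (Phi x)))).
Proof.
  intros Phi.
  assert (HW : Wave f tau c U V) by (split; [exact Hsmooth|split; [exact Hbist|split; [lra|exact Hwave]]]).
  pose proof (W_d _ _ _ _ _ HW) as Hd.
  assert (Htn : tau <> 0) by lra.
  split; [unfold Phi; exact (W_H2C2 f tau c U V HW)|].
  split.
  { exists 0. unfold Phi. intros Heq. injection Heq as E1 E2.
    destruct (W_Phi_nz _ _ _ _ _ HW 0) as [Hn|Hn]; apply Hn; unfold P1; assumption. }
  split.
  { exists (fun x => RtoC (Q1 f tau c U V x)), (fun x => RtoC (Q2 f tau c U V x)).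
    split; [intros x; apply is_derive_RtoC; apply (W_dP1 _ _ _ _ _ HW)|].
    split; [intros x; apply is_derive_RtoC; apply (W_dP2 _ _ _ _ _ HW)|].
    intros x. unfold Phi, RtoC, Copp, Cplus, Cmult. cbn [fst snd].
    unfold Q1, Q2, gg, P1, dd in *. f_equal; f_equal; field; auto. }
  intros w Hw [d1 [d2 [Hd1 [Hd2 He]]]].
  destruct Hw as [[a1 [b1 [_ [_ [_ [Lw1 _]]]]]] [a2 [b2 [_ [_ [_ [Lw2 _]]]]]]].
  destruct (L2C_bound _ Lw1) as [B1 HB1]. destruct (L2C_bound _ Lw2) as [B2 HB2].
  set (h := fun x => Cmod (fst (w x)) ^ 2 + Cmod (snd (w x)) ^ 2).
  assert (Hh : forall a b, a <= b -> ex_RInt h a b /\ RInt h a b <= B1 + B2).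
  { intros a b Hab. destruct (HB1 a b Hab) as [E1 R1']. destruct (HB2 a b Hab) as [E2 R2'].
    split.
    - apply (@ex_RInt_plus R_NormedModule); auto.
    - assert (E : RInt h a b = RInt (fun x => Cmod (fst (w x)) ^ 2) a b + RInt (fun x => Cmod (snd (w x)) ^ 2) a b)
        by exact (@RInt_plus R_CompleteNormedModule _ _ a b E1 E2).
      rewrite E. lra. }
  assert (Eqs : forall x,
    fst (d1 x) = mp c tau (gg f U x) * fst (fst (w x)) + mq c tau * fst (snd (w x)) /\
    fst (d2 x) = mr c tau (gg f U x) * fst (fst (w x)) + ms c tau * fst (snd (w x)) /\
    snd (d1 x) = mp c tau (gg f U x) * snd (fst (w x)) + mq c tau * snd (snd (w x)) /\
    snd (d2 x) = mr c tau (gg f U x) * snd (fst (w x)) + ms c tau * snd (snd (w x))).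
  { intros x. specialize (He x).
    pose proof (f_equal (fun p => fst (fst p)) He) as F1.
    pose proof (f_equal (fun p => fst (snd p)) He) as F2.
    pose proof (f_equal (fun p => snd (fst p)) He) as F3.
    pose proof (f_equal (fun p => snd (snd p)) He) as F4.
    unfold RtoC, Copp, Cplus, Cmult in F1, F2, F3, F4. cbn [fst snd] in F1, F2, F3, F4.
    destruct (solve2 c tau (gg f U x) (fst (fst (w x))) (fst (snd (w x))) (fst (d1 x)) (fst (d2 x)) Hd)
      as [G1 G2].
    { unfold gg. lra. }
    { match goal with |- ?E = 0 => assert (HX : / tau * E = 0) by (rewrite F2; ring) end.
      apply (Rmult_eq_reg_l (/ tau)); [rewrite HX; ring|apply Rinv_neq_0_compat; exact Htn]. }
    destruct (solve2 c tau (gg f U x) (snd (fst (w x))) (snd (snd (w x))) (snd (d1 x)) (snd (d2 x)) Hd)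
      as [G3 G4].
    { unfold gg. lra. }
    { match goal with |- ?E = 0 => assert (HX : / tau * E = 0) by (rewrite F4; ring) end.
      apply (Rmult_eq_reg_l (/ tau)); [rewrite HX; ring|apply Rinv_neq_0_compat; exact Htn]. }
    auto. }
  destruct (W_real_kernel f tau c U V (fun x => fst (fst (w x))) (fun x => fst (snd (w x))) h (B1 + B2) HW)
    as [kr Hkr].
  { intros x. rewrite <- (proj1 (Eqs x)). apply (is_derive_C_re (fun y => fst (w y))). apply Hd1. }
  { intros x. rewrite <- (proj1 (proj2 (Eqs x))). apply (is_derive_C_re (fun y => snd (w y))). apply Hd2. }
  { intros x. unfold h. rewrite !Cmod_sq.
    pose proof (pow2_ge_0 (snd (fst (w x)))). pose proof (pow2_ge_0 (snd (snd (w x)))). lra. }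
  { exact Hh. }
  destruct (W_real_kernel f tau c U V (fun x => snd (fst (w x))) (fun x => snd (snd (w x))) h (B1 + B2) HW)
    as [ki Hki].
  { intros x. rewrite <- (proj1 (proj2 (proj2 (Eqs x)))). apply (is_derive_C_im (fun y => fst (w y))). apply Hd1. }
  { intros x. rewrite <- (proj2 (proj2 (proj2 (Eqs x)))). apply (is_derive_C_im (fun y => snd (w y))). apply Hd2. }
  { intros x. unfold h. rewrite !Cmod_sq.
    pose proof (pow2_ge_0 (fst (fst (w x)))). pose proof (pow2_ge_0 (fst (snd (w x)))). lra. }
  { exact Hh. }
  exists (kr, ki). intros x.
  destruct (Hkr x) as [K1 K2]. destruct (Hki x) as [K3 K4]. cbn beta in K1, K2, K3, K4.
  unfold Phi, RtoC, Cmult. cbn [fst snd]. unfold P1 in *.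
  destruct (w x) as [[a b] [e g]]. cbn [fst snd] in *.
  rewrite K1, K2, K3, K4. f_equal; f_equal; ring.
Qed.
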